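(* Let $f(z)=\sum_{k=0}^\infty a_kz^{n_k}$ be analytic in $\mathbb D$, where $\{n_k\}$ are positive integers with $n_{k+1}\ge\lambda n_k$ for all $k$ and some $\lambda>1$. If $\sum_{k=0}^\infty|a_k|^2(\log n_k)^3<\infty$, then $f\in BMOA_{\log}\cap H^\infty$.
   Context: $\mathbb D$ is the open unit disc, $dA=\frac1\pi dx\,dy$, $H^\infty$ is the space of bounded analytic functions on $\mathbb D$. For an arc $I\subset\partial\mathbb D$ of length $|I|$, $S(I)=\{re^{it}: e^{it}\in I,\ 1-\frac{|I|}{2\pi}\le r<1\}$. $BMOA_{\log}$ is the space of $g\in H^1$ for which there is $C>0$ with $\int_{S(I)}(1-|z|^2)|g'(z)|^2\,dA(z)\le C|I|\left(\log\frac{2}{|I|}\right)^{-2}$ for every arc $I$. *)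

(* Defs.v *)
From Stdlib Require Import Reals.
Open Scope R_scope.

Definition Cx : Type := (R * R)%type.
Definition C0 : Cx := (0, 0).
Definition Cadd (z w : Cx) : Cx := (fst z + fst w, snd z + snd w).
Definition Copp (z : Cx) : Cx := (- fst z, - snd z).
Definition Csub (z w : Cx) : Cx := Cadd z (Copp w).
Definition Cmul (z w : Cx) : Cx :=
  (fst z * fst w - snd z * snd w, fst z * snd w + snd z * fst w).
Fixpoint Cpow (z : Cx) (n : nat) : Cx :=
  match n with O => (1, 0) | S m => Cmul z (Cpow z m) end.
Definition Cnorm (z : Cx) : R := sqrt (fst z ^ 2 + snd z ^ 2).
Definition polar (r t : R) : Cx := (r * cos t, r * sin t).

Definition inD (z : Cx) : Prop := Cnorm z < 1.

Definition has_cderiv (g : Cx -> Cx) (z w : Cx) : Prop :=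
  forall eps, 0 < eps -> exists delta, 0 < delta /\
    forall h, Cnorm h < delta ->
      Cnorm (Csub (Csub (g (Cadd z h)) (g z)) (Cmul w h)) <= eps * Cnorm h.

Definition int1 (g : R -> R) (a b V : R) : Prop :=
  Un_cv (fun n => ((b - a) / INR (S n)) *
     sum_f_R0 (fun i => g (a + (INR i + / 2) * (b - a) / INR (S n))) n) V.

Definition int2 (g : R -> R -> R) (a b c d V : R) : Prop :=
  Un_cv (fun n => ((b - a) / INR (S n)) * ((d - c) / INR (S n)) *
     sum_f_R0 (fun i => sum_f_R0 (fun j =>
        g (a + (INR i + / 2) * (b - a) / INR (S n))
          (c + (INR j + / 2) * (d - c) / INR (S n))) n) n) V.

Definition bounded_on_D (g : Cx -> Cx) : Prop :=
  exists M, forall z, inD z -> Cnorm (g z) <= M.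

Definition H1 (g : Cx -> Cx) : Prop :=
  (forall z, inD z -> exists w, has_cderiv g z w) /\
  exists M, forall r, 0 <= r < 1 ->
    exists V, int1 (fun t => Cnorm (g (polar r t))) 0 (2 * PI) V /\
              V / (2 * PI) <= M.

Definition Hinf (g : Cx -> Cx) : Prop :=
  (forall z, inD z -> exists w, has_cderiv g z w) /\ bounded_on_D g.

(* The arc I = { e^{it} : t0 <= t <= t0 + l }, 0 < l <= 2 pi, |I| = l.
   S(I) = { r e^{it} : t in [t0, t0+l], 1 - l/(2 pi) <= r < 1 }.
   With dA = (1/pi) dx dy = (1/pi) r dr dt, the integral
     int_{S(I)} (1-|z|^2) |g'(z)|^2 dA(z)
   is the (monotone) limit as rho -> 1- of the integrals over the polar
   rectangles [t0, t0+l] x [1 - l/(2pi), rho]; so "integral <= B" means each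
   of these truncated integrals is <= B.  The bound C |I| (log(2/|I|))^{-2}
   is written multiplied out, V * (log(2/|I|))^2 <= C |I|, so that it is
   +infinity (no constraint) exactly when log(2/|I|) = 0. *)
Definition carleson_box_bound (g' : Cx -> Cx) (K : R) (t0 l : R) : Prop :=
  forall rho, 1 - l / (2 * PI) <= rho < 1 ->
    exists V,
      int2 (fun t r => / PI * ((1 - r ^ 2) * (Cnorm (g' (polar r t))) ^ 2 * r))
           t0 (t0 + l) (1 - l / (2 * PI)) rho V /\
      V * (ln (2 / l)) ^ 2 <= K * l.

Definition BMOA_log (g : Cx -> Cx) : Prop :=
  H1 g /\
  exists g' : Cx -> Cx, (forall z, inD z -> has_cderiv g z (g' z)) /\
  exists K, 0 < K /\
    forall t0 l, 0 < l <= 2 * PI -> carleson_box_bound g' K t0 l.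

Fixpoint lac_psum (a : nat -> Cx) (n : nat -> nat) (z : Cx) (N : nat) : Cx :=
  match N with
  | O => Cmul (a O) (Cpow z (n O))
  | S M => Cadd (lac_psum a n z M) (Cmul (a (S M)) (Cpow z (n (S M))))
  end.

(* Main.v *)
Require Import Defs.
From Coquelicot Require Import Coquelicot.
From Stdlib Require Import Reals Lra Lia Psatz ZArith FunctionalExtensionality.
Open Scope R_scope.

Lemma lip_continuous (G : R -> R) (K : R) (x : R) :
  (forall u v, Rabs (G u - G v) <= K * Rabs (u - v)) -> continuous G x.
Proof.
  intros HL. apply continuity_pt_filterlim.
  intros eps Heps.
  exists (eps / (Rabs K + 1)). split.
  { apply Rdiv_lt_0_compat; [lra| pose proof (Rabs_pos K); lra]. }
  intros y [_ Hy]. unfold dist; simpl; unfold R_dist.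
  pose proof (HL y x). pose proof (Rabs_pos K).
  assert (K * Rabs (y - x) <= Rabs K * Rabs (y - x)).
  { apply Rmult_le_compat_r; [apply Rabs_pos| apply RRle_abs]. }
  assert (Rabs K * Rabs (y - x) < eps).
  { destruct (Rle_lt_or_eq_dec 0 (Rabs (y - x)) (Rabs_pos _)) as [Hp|Hp].
    - apply Rle_lt_trans with ((Rabs K + 1) * Rabs (y - x)). nra.
      apply Rmult_lt_reg_l with (/ (Rabs K + 1)). apply Rinv_0_lt_compat; lra.
      rewrite <- Rmult_assoc, Rinv_l by lra. rewrite Rmult_1_l.
      simpl in Hy; unfold R_dist, Rdiv in Hy. lra.
    - rewrite <- Hp. lra. }
  lra.
Qed.

Lemma lip_ex_RInt (G : R -> R) (K a b : R) :
  (forall u v, Rabs (G u - G v) <= K * Rabs (u - v)) -> ex_RInt G a b.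
Proof.
  intros HL. apply (ex_RInt_continuous (V := R_CompleteNormedModule)). intros z _. eapply lip_continuous; eauto.
Qed.

Lemma cell_err (G : R -> R) (K x y : R) :
  x <= y -> 0 <= K -> (forall u v, Rabs (G u - G v) <= K * Rabs (u - v)) ->
  Rabs (RInt G x y - (y - x) * G ((x + y) / 2)) <= (y - x) * (K * (y - x)).
Proof.
  intros Hxy HK HL.
  assert (HI : is_RInt (fun t => G t - G ((x + y) / 2)) x y
                  (RInt G x y - (y - x) * G ((x + y) / 2))).
  { apply (is_RInt_minus (V := R_NormedModule)).
    - apply (RInt_correct (V := R_CompleteNormedModule)). eapply lip_ex_RInt; eauto.
    - apply (is_RInt_const (V := R_NormedModule)). }
  rewrite <- (is_RInt_unique _ _ _ _ HI).
  apply abs_RInt_le_const; auto.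
  - eexists; eauto.
  - intros t Ht. eapply Rle_trans. apply HL.
    apply Rmult_le_compat_l; auto. apply Rabs_le. lra.
Qed.

Definition msum (G : R -> R) (a b : R) (n : nat) : R :=
  ((b - a) / INR (S n)) *
     sum_f_R0 (fun i => G (a + (INR i + / 2) * (b - a) / INR (S n))) n.

Lemma msum_err (G : R -> R) (K a b : R) (n : nat) :
  a <= b -> 0 <= K -> (forall u v, Rabs (G u - G v) <= K * Rabs (u - v)) ->
  Rabs (msum G a b n - RInt G a b) <= K * (b - a) ^ 2 / INR (S n).
Proof.
  intros Hab HK HL.
  assert (HSn : 0 < INR (S n)) by (apply lt_0_INR; lia).
  set (D := (b - a) / INR (S n)).
  assert (HD : 0 <= D) by (unfold D; apply Rdiv_le_0_compat; lra).
  assert (Hex : forall u v, ex_RInt G u v) by (intros; eapply lip_ex_RInt; eauto).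
  assert (P : forall j, Rabs (D * sum_f_R0 (fun i => G (a + INR i * D + D / 2)) j
                      - RInt G a (a + INR (S j) * D)) <= INR (S j) * D * (K * D)).
  { induction j.
    - simpl sum_f_R0. rewrite S_INR. simpl INR.
      pose proof (cell_err G K a (a + (0 + 1) * D) ltac:(nra) HK HL) as H.
      replace ((a + (0 + 1) * D - a)) with D in H by ring.
      replace ((a + (a + (0 + 1) * D)) / 2) with (a + 0 * D + D / 2) in H by field.
      replace (D * G (a + 0 * D + D / 2) - RInt G a (a + (0 + 1) * D))
        with (- (RInt G a (a + (0 + 1) * D) - D * G (a + 0 * D + D / 2))) by ring.
      rewrite Rabs_Ropp. lra.
    - rewrite tech5.
      assert (HC : RInt G a (a + INR (S (S j)) * D) =
                   RInt G a (a + INR (S j) * D) + RInt G (a + INR (S j) * D) (a + INR (S (S j)) * D)).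
      { symmetry. apply (RInt_Chasles (V := R_CompleteNormedModule)); auto. }
      rewrite HC.
      pose proof (cell_err G K (a + INR (S j) * D) (a + INR (S (S j)) * D)) as H.
      rewrite (S_INR (S j)) in H |- *.
      replace (a + (INR (S j) + 1) * D - (a + INR (S j) * D)) with D in H by ring.
      replace ((a + INR (S j) * D + (a + (INR (S j) + 1) * D)) / 2)
        with (a + INR (S j) * D + D / 2) in H by field.
      assert (HH := H ltac:(nra) HK HL).
      set (s1 := sum_f_R0 (fun i : nat => G (a + INR i * D + D / 2)) j) in *.
      set (I1 := RInt G a (a + INR (S j) * D)) in *.
      set (I2 := RInt G (a + INR (S j) * D) (a + (INR (S j) + 1) * D)) in *.
      set (g1 := G (a + INR (S j) * D + D / 2)) in *.
      replace (D * (s1 + g1) - (I1 + I2)) with ((D * s1 - I1) - (I2 - D * g1)) by ring.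
      eapply Rle_trans. apply Rabs_triang. rewrite Rabs_Ropp. nra. }
  specialize (P n).
  assert (Hb : a + INR (S n) * D = b) by (unfold D; field; lra).
  rewrite Hb in P.
  unfold msum. fold D.
  replace (sum_f_R0 (fun i : nat => G (a + (INR i + / 2) * (b - a) / INR (S n))) n)
    with (sum_f_R0 (fun i : nat => G (a + INR i * D + D / 2)) n).
  2: { apply sum_eq. intros i _. f_equal. unfold D. field. lra. }
  eapply Rle_trans. exact P.
  right. unfold D. field. lra.
Qed.

Lemma cv_rate (u : nat -> R) (V M : R) :
  0 <= M -> (forall m, Rabs (u m - V) <= M / INR (S m)) -> Un_cv u V.
Proof.
  intros HM Hu eps Heps.
  destruct (archimed (M / eps)) as [Har _].
  assert (Hpos : (0 <= up (M / eps))%Z).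
  { apply le_IZR. assert (0 <= M / eps) by (apply Rdiv_le_0_compat; lra). lra. }
  exists (Z.to_nat (up (M / eps))). intros m Hm.
  unfold R_dist. eapply Rle_lt_trans; [apply Hu|].
  assert (HSn : 0 < INR (S m)) by (apply lt_0_INR; lia).
  assert (HmI : IZR (up (M / eps)) <= INR m).
  { rewrite <- (Z2Nat.id (up (M/eps))) by lia. rewrite <- INR_IZR_INZ. apply le_INR. lia. }
  rewrite S_INR in *.
  apply Rmult_lt_reg_r with (INR m + 1); auto. unfold Rdiv. rewrite Rmult_assoc, Rinv_l by lra.
  rewrite Rmult_1_r.
  assert (H1 : M / eps < INR m + 1) by lra.
  apply (Rmult_lt_compat_r eps) in H1; auto.
  unfold Rdiv in H1. rewrite Rmult_assoc, Rinv_l, Rmult_1_r in H1 by lra. lra.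
Qed.

Lemma msum_int1 (G : R -> R) (K a b : R) :
  a <= b -> 0 <= K -> (forall u v, Rabs (G u - G v) <= K * Rabs (u - v)) ->
  int1 G a b (RInt G a b).
Proof.
  intros Hab HK HL. apply (cv_rate _ _ (K * (b - a) ^ 2)).
  - apply Rmult_le_pos; [lra | apply pow2_ge_0].
  - intros m. apply (msum_err G K a b m Hab HK HL).
Qed.

Definition clamp (a b x : R) : R := Rmax a (Rmin b x).

Lemma clamp_in (a b x : R) : a <= b -> a <= clamp a b x <= b.
Proof. intros. unfold clamp, Rmax, Rmin. repeat destruct Rle_dec; lra. Qed.
Lemma clamp_id (a b x : R) : a <= x <= b -> clamp a b x = x.
Proof. intros. unfold clamp, Rmax, Rmin. repeat destruct Rle_dec; lra. Qed.
Lemma clamp_lip (a b x y : R) : a <= b -> Rabs (clamp a b x - clamp a b y) <= Rabs (x - y).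
Proof. intros. unfold clamp, Rmax, Rmin, Rabs. repeat destruct Rle_dec; repeat destruct Rcase_abs; lra. Qed.

Lemma sum_abs_bound (u : nat -> R) (B : R) (N : nat) :
  (forall i, Rabs (u i) <= B) -> Rabs (sum_f_R0 u N) <= INR (S N) * B.
Proof.
  intros H. induction N.
  - simpl. rewrite Rmult_1_l. apply H.
  - rewrite tech5, S_INR. eapply Rle_trans. apply Rabs_triang. specialize (H (S N)). lra.
Qed.

Lemma RInt_lip_param (G : R -> R -> R) (K c d t t' : R) :
  c <= d -> 0 <= K ->
  (forall t t' r r', Rabs (G t r - G t' r') <= K * (Rabs (t - t') + Rabs (r - r'))) ->
  Rabs (RInt (G t) c d - RInt (G t') c d) <= (K * (d - c)) * Rabs (t - t').
Proof.
  intros Hcd HK HL.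
  assert (Hlip : forall s, forall u v, Rabs (G s u - G s v) <= K * Rabs (u - v)).
  { intros s u v. eapply Rle_trans. apply HL. replace (s - s) with 0 by ring.
    rewrite Rabs_R0, Rplus_0_l. lra. }
  assert (HI : is_RInt (fun r => G t r - G t' r) c d (RInt (G t) c d - RInt (G t') c d)).
  { apply (is_RInt_minus (V := R_NormedModule));
    apply (RInt_correct (V := R_CompleteNormedModule)); eapply lip_ex_RInt; eauto. }
  rewrite <- (is_RInt_unique _ _ _ _ HI).
  eapply Rle_trans. apply abs_RInt_le_const; auto.
  - eexists; eauto.
  - intros r _. eapply Rle_trans. apply HL. replace (r - r) with 0 by ring.
    rewrite Rabs_R0, Rplus_0_r. apply Rle_refl.
  - right. ring.
Qed.

Definition F2 (g : R -> R -> R) (a b c d : R) (t : R) : R :=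
  RInt (fun r => g (clamp a b t) (clamp c d r)) c d.

Lemma int2_lip (g : R -> R -> R) (a b c d K : R) :
  a <= b -> c <= d -> 0 <= K ->
  (forall t t' r r', a <= t <= b -> a <= t' <= b -> c <= r <= d -> c <= r' <= d ->
     Rabs (g t r - g t' r') <= K * (Rabs (t - t') + Rabs (r - r'))) ->
  int2 g a b c d (RInt (F2 g a b c d) a b).
Proof.
  intros Hab Hcd HK HL.
  set (G := fun t r => g (clamp a b t) (clamp c d r)).
  assert (HG : forall t t' r r', Rabs (G t r - G t' r') <= K * (Rabs (t - t') + Rabs (r - r'))).
  { intros. unfold G. eapply Rle_trans. apply HL; try apply clamp_in; auto.
    apply Rmult_le_compat_l; auto. pose proof (clamp_lip a b t t' Hab).
    pose proof (clamp_lip c d r r' Hcd). lra. }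
  assert (HGr : forall s u v, Rabs (G s u - G s v) <= K * Rabs (u - v)).
  { intros s u v. eapply Rle_trans. apply HG. replace (s - s) with 0 by ring.
    rewrite Rabs_R0, Rplus_0_l. lra. }
  set (F := F2 g a b c d).
  assert (HF : forall u v, Rabs (F u - F v) <= (K * (d - c)) * Rabs (u - v)).
  { intros u v. apply (RInt_lip_param G K c d u v Hcd HK HG). }
  assert (HK2 : 0 <= K * (d - c)) by (apply Rmult_le_pos; lra).
  apply (cv_rate _ _ ((b - a) * (K * (d - c) ^ 2) + K * (d - c) * (b - a) ^ 2)).
  { apply Rplus_le_le_0_compat; repeat apply Rmult_le_pos; try lra; apply pow2_ge_0. }
  intros m.
  assert (HSn : 0 < INR (S m)) by (apply lt_0_INR; lia).
  set (Dt := (b - a) / INR (S m)). set (Dr := (d - c) / INR (S m)).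
  set (ti := fun i => a + (INR i + / 2) * (b - a) / INR (S m)).
  assert (Hti : forall i, (i <= m)%nat -> a <= ti i <= b).
  { intros i Hi. unfold ti. apply le_INR in Hi. pose proof (pos_INR i).
    split.
    - assert (0 <= (INR i + / 2) * (b - a) / INR (S m)).
      { apply Rdiv_le_0_compat; auto. apply Rmult_le_pos; lra. } lra.
    - assert ((INR i + / 2) * (b - a) / INR (S m) <= b - a).
      { apply (Rmult_le_reg_r (INR (S m))); auto. unfold Rdiv.
        rewrite Rmult_assoc, Rinv_l by lra. rewrite S_INR. nra. } lra. }
  assert (Hrj : forall j, (j <= m)%nat -> c <= c + (INR j + / 2) * (d - c) / INR (S m) <= d).
  { intros j Hj. apply le_INR in Hj. pose proof (pos_INR j).
    split.
    - assert (0 <= (INR j + / 2) * (d - c) / INR (S m)).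
      { apply Rdiv_le_0_compat; auto. apply Rmult_le_pos; lra. } lra.
    - assert ((INR j + / 2) * (d - c) / INR (S m) <= d - c).
      { apply (Rmult_le_reg_r (INR (S m))); auto. unfold Rdiv.
        rewrite Rmult_assoc, Rinv_l by lra. rewrite S_INR. nra. } lra. }
  replace (Dt * Dr * sum_f_R0 (fun i => sum_f_R0 (fun j =>
             g (a + (INR i + / 2) * (b - a) / INR (S m))
               (c + (INR j + / 2) * (d - c) / INR (S m))) m) m)
    with (Dt * sum_f_R0 (fun i => msum (G (ti i)) c d m) m).
  2: { rewrite Rmult_assoc. f_equal. rewrite scal_sum. apply sum_eq. intros i Hi.
       unfold msum. fold Dr. rewrite Rmult_comm. f_equal. apply sum_eq. intros j Hj.
       unfold G. rewrite (clamp_id a b); [| apply Hti; auto]. rewrite (clamp_id c d); auto. }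
  replace (Dt * sum_f_R0 (fun i => msum (G (ti i)) c d m) m - RInt F a b)
    with (Dt * sum_f_R0 (fun i => msum (G (ti i)) c d m - F (ti i)) m
          + (msum F a b m - RInt F a b)).
  2: { rewrite minus_sum.
       assert (E : msum F a b m = Dt * sum_f_R0 (fun i => F (ti i)) m) by reflexivity.
       rewrite E. ring. }
  eapply Rle_trans. apply Rabs_triang.
  replace (((b - a) * (K * (d - c) ^ 2) + K * (d - c) * (b - a) ^ 2) / INR (S m))
    with (Dt * (INR (S m) * (K * (d - c) ^ 2 / INR (S m))) + K * (d - c) * (b - a) ^ 2 / INR (S m)).
  2: { unfold Dt. field. lra. }
  apply Rplus_le_compat.
  - rewrite Rabs_mult. rewrite (Rabs_right Dt).
    2: { apply Rle_ge. unfold Dt. apply Rdiv_le_0_compat; lra. }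
    apply Rmult_le_compat_l. { unfold Dt. apply Rdiv_le_0_compat; lra. }
    apply sum_abs_bound. intros i.
    change (F (ti i)) with (RInt (G (ti i)) c d).
    apply (msum_err (G (ti i)) K c d m Hcd HK (HGr (ti i))).
  - apply (msum_err F (K * (d - c)) a b m Hab HK2 HF).
Qed.

Lemma RInt_F2_bound (g : R -> R -> R) (a b c d K B : R) :
  a <= b -> c <= d -> 0 <= K ->
  (forall t t' r r', a <= t <= b -> a <= t' <= b -> c <= r <= d -> c <= r' <= d ->
     Rabs (g t r - g t' r') <= K * (Rabs (t - t') + Rabs (r - r'))) ->
  (forall t, a <= t <= b -> F2 g a b c d t <= B) ->
  RInt (F2 g a b c d) a b <= (b - a) * B.
Proof.
  intros Hab Hcd HK HL HB.
  set (G := fun t r => g (clamp a b t) (clamp c d r)).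
  assert (HG : forall t t' r r', Rabs (G t r - G t' r') <= K * (Rabs (t - t') + Rabs (r - r'))).
  { intros. unfold G. eapply Rle_trans. apply HL; try apply clamp_in; auto.
    apply Rmult_le_compat_l; auto. pose proof (clamp_lip a b t t' Hab).
    pose proof (clamp_lip c d r r' Hcd). lra. }
  assert (HF : forall u v, Rabs (F2 g a b c d u - F2 g a b c d v) <= (K * (d - c)) * Rabs (u - v)).
  { intros u v. apply (RInt_lip_param G K c d u v Hcd HK HG). }
  assert (HI : is_RInt (fun _ => B) a b (scal (b - a) B)) by apply (is_RInt_const (V := R_NormedModule)).
  replace ((b - a) * B) with (RInt (fun _ => B) a b).
  2: { rewrite (is_RInt_unique _ _ _ _ HI). reflexivity. }
  apply RInt_le; auto.
  - eapply lip_ex_RInt; eauto.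
  - eexists; eauto.
  - intros; apply HB; lra.
Qed.


Ltac ceq := apply injective_projections; simpl; ring.

Lemma cn_pos (z : Cx) : 0 <= Cnorm z.
Proof. apply Cmod_ge_0. Qed.
Lemma cn_mul (z w : Cx) : Cnorm (Cmul z w) = Cnorm z * Cnorm w.
Proof. apply Cmod_mult. Qed.
Lemma cn_pow (z : Cx) (m : nat) : Cnorm (Cpow z m) = Cnorm z ^ m.
Proof. apply Cmod_pow. Qed.
Lemma cn_add (z w : Cx) : Cnorm (Cadd z w) <= Cnorm z + Cnorm w.
Proof. apply Cmod_triangle. Qed.
Lemma cn_opp (z : Cx) : Cnorm (Copp z) = Cnorm z.
Proof. apply Cmod_opp. Qed.
Lemma cn_sub (z w : Cx) : Cnorm (Csub z w) <= Cnorm z + Cnorm w.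
Proof. unfold Csub. eapply Rle_trans. apply cn_add. rewrite cn_opp. lra. Qed.
Lemma cn_real (x : R) : Cnorm (x, 0) = Rabs x.
Proof. apply Cmod_R. Qed.
Lemma cn_fst (z : Cx) : Rabs (fst z) <= Cnorm z.
Proof. pose proof (Rmax_Cmod z). pose proof (Rmax_l (Rabs (fst z)) (Rabs (snd z))).
  change (Cnorm z) with (Cmod z). lra. Qed.
Lemma cn_snd (z : Cx) : Rabs (snd z) <= Cnorm z.
Proof. pose proof (Rmax_Cmod z). pose proof (Rmax_r (Rabs (fst z)) (Rabs (snd z))).
  change (Cnorm z) with (Cmod z). lra. Qed.
Lemma cn_le_abs (z : Cx) : Cnorm z <= Rabs (fst z) + Rabs (snd z).
Proof.
  destruct z as [x y]. unfold Cnorm. cbn [fst snd].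
  pose proof (Rabs_pos x); pose proof (Rabs_pos y).
  rewrite <- (sqrt_pow2 (Rabs x + Rabs y)) by lra.
  apply sqrt_le_1_alt. rewrite <- (pow2_abs x), <- (pow2_abs y). nra.
Qed.
Lemma cn_sub_tri (z u w : Cx) : Cnorm (Csub z w) <= Cnorm (Csub z u) + Cnorm (Csub u w).
Proof.
  replace (Csub z w) with (Cadd (Csub z u) (Csub u w)) by (unfold Csub, Cadd, Copp; ceq).
  apply cn_add.
Qed.
Lemma cn_sub_sym (z w : Cx) : Cnorm (Csub z w) = Cnorm (Csub w z).
Proof.
  replace (Csub z w) with (Copp (Csub w z)) by (unfold Csub, Cadd, Copp; ceq).
  apply cn_opp.
Qed.
Lemma cn_polar (r t : R) : Cnorm (polar r t) = Rabs r.
Proof.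
  unfold Cnorm, polar. cbn [fst snd].
  pose proof (sin2_cos2 t) as H. unfold Rsqr in H.
  replace ((r * cos t) ^ 2 + (r * sin t) ^ 2) with (r ^ 2 * (sin t * sin t + cos t * cos t)) by ring.
  rewrite H, Rmult_1_r. rewrite <- (pow2_abs r). apply sqrt_pow2, Rabs_pos.
Qed.

Lemma sin_abs_le (x : R) : Rabs (sin x) <= Rabs x.
Proof.
  assert (Hp : forall y, 0 <= y -> Rabs (sin y) <= y).
  { intros y Hy. destruct (Rle_lt_dec y 1).
    - destruct (Req_dec y 0) as [->|Hne]. { rewrite sin_0, Rabs_R0. lra. }
      assert (0 <= sin y) by (apply sin_ge_0; pose proof PI2_1 as HPI3; lra).
      pose proof (sin_lt_x y ltac:(lra)). rewrite Rabs_right; lra.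
    - pose proof (SIN_bound y). apply Rabs_le. lra. }
  destruct (Rle_lt_dec 0 x).
  - rewrite (Rabs_right x) by lra. auto.
  - rewrite <- (Ropp_involutive x), sin_neg, Rabs_Ropp, Rabs_Ropp.
    rewrite (Rabs_right (- x)) by lra. apply Hp. lra.
Qed.

Lemma cos_lip (t t' : R) : Rabs (cos t - cos t') <= Rabs (t - t').
Proof.
  rewrite form2. rewrite !Rabs_mult.
  pose proof (sin_abs_le ((t - t') / 2)). pose proof (SIN_bound ((t + t') / 2)).
  assert (Rabs (sin ((t + t') / 2)) <= 1) by (apply Rabs_le; lra).
  replace (Rabs ((t - t') / 2)) with (Rabs (t - t') / 2) in H.
  2: { unfold Rdiv. rewrite Rabs_mult. rewrite (Rabs_right (/ 2)) by lra. reflexivity. }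
  replace (Rabs (-2)) with 2 by (rewrite Rabs_left; lra).
  pose proof (Rabs_pos (sin ((t - t') / 2))). pose proof (Rabs_pos (sin ((t + t') / 2))). nra.
Qed.

Lemma sin_lip (t t' : R) : Rabs (sin t - sin t') <= Rabs (t - t').
Proof.
  rewrite form4. rewrite !Rabs_mult.
  pose proof (sin_abs_le ((t - t') / 2)). pose proof (COS_bound ((t + t') / 2)).
  assert (Rabs (cos ((t + t') / 2)) <= 1) by (apply Rabs_le; lra).
  replace (Rabs ((t - t') / 2)) with (Rabs (t - t') / 2) in H.
  2: { unfold Rdiv. rewrite Rabs_mult. rewrite (Rabs_right (/ 2)) by lra. reflexivity. }
  replace (Rabs 2) with 2 by (rewrite Rabs_right; lra).
  pose proof (Rabs_pos (sin ((t - t') / 2))). pose proof (Rabs_pos (cos ((t + t') / 2))). nra.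
Qed.

Lemma polar_lip (r t r' t' : R) :
  Cnorm (Csub (polar r t) (polar r' t')) <= Rabs (r - r') + 2 * Rabs r' * Rabs (t - t').
Proof.
  replace (Csub (polar r t) (polar r' t'))
    with (Cadd (polar (r - r') t) (r' * (cos t - cos t'), r' * (sin t - sin t'))%R)
    by (unfold Csub, Cadd, Copp, polar; ceq).
  eapply Rle_trans. apply cn_add. rewrite cn_polar. apply Rplus_le_compat_l.
  eapply Rle_trans. apply cn_le_abs. cbn [fst snd]. rewrite !Rabs_mult.
  pose proof (cos_lip t t'). pose proof (sin_lip t t'). pose proof (Rabs_pos r'). nra.
Qed.

Fixpoint csum (u : nat -> Cx) (N : nat) : Cx :=
  match N with O => u O | S M => Cadd (csum u M) (u (S M)) end.

Lemma lac_psum_csum (a : nat -> Cx) (n : nat -> nat) (z : Cx) (N : nat) :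
  lac_psum a n z N = csum (fun k => Cmul (a k) (Cpow z (n k))) N.
Proof. induction N; simpl; [reflexivity| rewrite IHN; reflexivity]. Qed.

Lemma cn_csum (u : nat -> Cx) (N : nat) :
  Cnorm (csum u N) <= sum_f_R0 (fun k => Cnorm (u k)) N.
Proof.
  induction N; simpl; [lra|]. eapply Rle_trans. apply cn_add. lra.
Qed.

Lemma csum_sub (u v : nat -> Cx) (N : nat) :
  Csub (csum u N) (csum v N) = csum (fun k => Csub (u k) (v k)) N.
Proof.
  induction N; simpl; [reflexivity|]. rewrite <- IHN. unfold Csub, Cadd, Copp. ceq.
Qed.

Lemma csum_mul (w : Cx) (u : nat -> Cx) (N : nat) :
  Cmul (csum u N) w = csum (fun k => Cmul (u k) w) N.
Proof.
  induction N; simpl; [reflexivity|]. rewrite <- IHN. unfold Cmul, Cadd. ceq.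
Qed.

Lemma csum_fst (u : nat -> Cx) (N : nat) : fst (csum u N) = sum_f_R0 (fun k => fst (u k)) N.
Proof. induction N; simpl; [reflexivity| rewrite IHN; reflexivity]. Qed.
Lemma csum_snd (u : nat -> Cx) (N : nat) : snd (csum u N) = sum_f_R0 (fun k => snd (u k)) N.
Proof. induction N; simpl; [reflexivity| rewrite IHN; reflexivity]. Qed.

Lemma psum_mono (u : nat -> R) (i j : nat) :
  (forall k, 0 <= u k) -> (i <= j)%nat -> sum_f_R0 u i <= sum_f_R0 u j.
Proof.
  intros Hu Hij. induction Hij; [lra|]. simpl. pose proof (Hu (S m)). lra.
Qed.

Lemma psum_nonneg (u : nat -> R) (N : nat) : (forall k, 0 <= u k) -> 0 <= sum_f_R0 u N.
Proof. intros Hu. induction N; simpl; [apply Hu| pose proof (Hu (S N)); lra]. Qed.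

Lemma psum_le (u v : nat -> R) (N : nat) :
  (forall k, u k <= v k) -> sum_f_R0 u N <= sum_f_R0 v N.
Proof. intros H. induction N; simpl; [apply H| pose proof (H (S N)); lra]. Qed.

Lemma psum_le_lim (u : nat -> R) (Sl : R) :
  (forall k, 0 <= u k) -> infinite_sum u Sl -> forall N, sum_f_R0 u N <= Sl.
Proof.
  intros Hu HS N. apply (growing_ineq (sum_f_R0 u)); auto.
  intros m. simpl. pose proof (Hu (S m)). lra.
Qed.

Lemma bounded_cv (u : nat -> R) (M : R) :
  (forall k, 0 <= u k) -> (forall N, sum_f_R0 u N <= M) -> exists Sl, infinite_sum u Sl.
Proof.
  intros Hu HM. destruct (growing_cv (sum_f_R0 u)) as [Sl HS].
  - intros m. simpl. pose proof (Hu (S m)). lra.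
  - exists M. intros x [i ->]. apply HM.
  - exists Sl. exact HS.
Qed.

Lemma term_le_lim (u : nat -> R) (Sl : R) (k : nat) :
  (forall k, 0 <= u k) -> infinite_sum u Sl -> u k <= Sl.
Proof.
  intros Hu HS. eapply Rle_trans; [| apply (psum_le_lim u Sl Hu HS k)].
  destruct k; simpl; [lra|]. pose proof (psum_nonneg u k Hu). lra.
Qed.

Lemma le_cv0 (e : nat -> R) (v B : R) :
  Un_cv e 0 -> (forall N, v <= B + e N) -> v <= B.
Proof.
  intros He Hv. apply Rnot_lt_le. intros Hlt.
  destruct (He (v - B) ltac:(lra)) as [N HN]. specialize (HN N (Nat.le_refl N)).
  unfold R_dist in HN. rewrite Rminus_0_r in HN. specialize (Hv N).
  pose proof (Rle_abs (e N)). lra.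
Qed.

Lemma cv0_squeeze (e w : nat -> R) :
  Un_cv e 0 -> (forall N, 0 <= w N <= e N) -> Un_cv w 0.
Proof.
  intros He Hw eps Heps. destruct (He eps Heps) as [N HN]. exists N. intros m Hm.
  specialize (HN m Hm). specialize (Hw m). unfold R_dist in *. rewrite Rminus_0_r in *.
  rewrite Rabs_right by lra. pose proof (Rle_abs (e m)). lra.
Qed.

Lemma cv0_plus (e1 e2 : nat -> R) : Un_cv e1 0 -> Un_cv e2 0 -> Un_cv (fun N => e1 N + e2 N) 0.
Proof. intros H1 H2. replace 0 with (0 + 0) by ring. apply CV_plus; auto. Qed.

Lemma cv0_scal (e : nat -> R) (c : R) : Un_cv e 0 -> Un_cv (fun N => c * e N) 0.
Proof. intros H. replace 0 with (c * 0) by ring. apply CV_mult; auto.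
  intros eps Heps. exists O. intros. unfold R_dist. rewrite Rminus_eq_0, Rabs_R0. auto. Qed.

Definition climit (u : nat -> Cx) : Cx :=
  (Series (fun k => fst (u k)), Series (fun k => snd (u k))).

Lemma climit_cv (u : nat -> Cx) :
  (exists S, infinite_sum (fun k => Cnorm (u k)) S) ->
  Un_cv (fun N => Cnorm (Csub (csum u N) (climit u))) 0.
Proof.
  intros [Sl HS].
  assert (HexN : ex_series (fun k => Cnorm (u k))) by (exists Sl; apply is_series_Reals; auto).
  assert (H1 : ex_series (fun k => fst (u k))).
  { apply ex_series_Rabs. apply (ex_series_le (K := R_AbsRing) (V := R_CompleteNormedModule) _ (fun k => Cnorm (u k))); auto.
    intros k. change (norm (Rabs (fst (u k)))) with (Rabs (Rabs (fst (u k)))).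
    rewrite Rabs_Rabsolu. apply cn_fst. }
  assert (H2 : ex_series (fun k => snd (u k))).
  { apply ex_series_Rabs. apply (ex_series_le (K := R_AbsRing) (V := R_CompleteNormedModule) _ (fun k => Cnorm (u k))); auto.
    intros k. change (norm (Rabs (snd (u k)))) with (Rabs (Rabs (snd (u k)))).
    rewrite Rabs_Rabsolu. apply cn_snd. }
  assert (C1 : Un_cv (sum_f_R0 (fun k => fst (u k))) (Series (fun k => fst (u k)))).
  { apply is_series_Reals. apply Series_correct. auto. }
  assert (C2 : Un_cv (sum_f_R0 (fun k => snd (u k))) (Series (fun k => snd (u k)))).
  { apply is_series_Reals. apply Series_correct. auto. }
  apply (cv0_squeeze (fun N => Rabs (sum_f_R0 (fun k => fst (u k)) N - Series (fun k => fst (u k)))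
                               + Rabs (sum_f_R0 (fun k => snd (u k)) N - Series (fun k => snd (u k))))).
  - apply cv0_plus.
    + intros eps Heps. destruct (C1 eps Heps) as [N HN]. exists N. intros m Hm.
      specialize (HN m Hm). unfold R_dist in *. rewrite Rminus_0_r, Rabs_Rabsolu. auto.
    + intros eps Heps. destruct (C2 eps Heps) as [N HN]. exists N. intros m Hm.
      specialize (HN m Hm). unfold R_dist in *. rewrite Rminus_0_r, Rabs_Rabsolu. auto.
  - intros N. split; [apply cn_pos|].
    eapply Rle_trans. apply cn_le_abs. unfold Csub, Cadd, Copp, climit. cbn [fst snd].
    rewrite csum_fst, csum_snd. right. reflexivity.
Qed.


Lemma pow_le1 (x : R) (m : nat) : 0 <= x <= 1 -> x ^ m <= 1.
Proof. intros H. induction m; simpl; [lra|]. pose proof (pow_le x m (proj1 H)). nra. Qed.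

Lemma pow_anti (Q : R) (i j : nat) : 0 <= Q <= 1 -> (i <= j)%nat -> Q ^ j <= Q ^ i.
Proof.
  intros HQ Hij. induction Hij; [lra|]. simpl. pose proof (pow_le Q m (proj1 HQ)). nra.
Qed.

Lemma cn_zero : Cnorm ((0, 0) : Cx) = 0.
Proof. unfold Cnorm. cbn [fst snd]. replace (0 ^ 2 + 0 ^ 2) with 0 by ring. apply sqrt_0. Qed.

Lemma cpow_S (z : Cx) (m : nat) : Cpow z (S m) = Cmul z (Cpow z m).
Proof. reflexivity. Qed.

Lemma cpow_diff (z w : Cx) (Q : R) (m : nat) :
  Cnorm z <= Q -> Cnorm w <= Q ->
  Cnorm (Csub (Cpow z m) (Cpow w m)) <= INR m * Q ^ (m - 1) * Cnorm (Csub z w).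
Proof.
  intros Hz Hw. assert (HQ : 0 <= Q) by (pose proof (cn_pos z); lra).
  induction m.
  - replace (Csub (Cpow z 0) (Cpow w 0)) with ((0, 0) : Cx) by (unfold Csub, Cadd, Copp; simpl; ceq).
    rewrite cn_zero. simpl. pose proof (cn_pos (Csub z w)). lra.
  - rewrite !cpow_S.
    replace (Csub (Cmul z (Cpow z m)) (Cmul w (Cpow w m)))
      with (Cadd (Cmul z (Csub (Cpow z m) (Cpow w m))) (Cmul (Csub z w) (Cpow w m))).
    2: { generalize (Cpow z m) (Cpow w m). intros [p1 p2] [q1 q2]. destruct z, w. unfold Csub, Cadd, Copp, Cmul. ceq. }
    eapply Rle_trans. apply cn_add. rewrite !cn_mul, cn_pow.
    pose proof (cn_pos (Csub z w)). pose proof (cn_pos (Csub (Cpow z m) (Cpow w m))).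
    assert (Hwm : Cnorm w ^ m <= Q ^ m) by (apply pow_incr; split; [apply cn_pos| auto]).
    replace (S m - 1)%nat with m by lia. rewrite S_INR.
    assert (Q * (INR m * Q ^ (m - 1)) <= INR m * Q ^ m).
    { destruct m. simpl. lra. replace (S m - 1)%nat with m by lia. simpl. lra. }
    assert (Cnorm z * Cnorm (Csub (Cpow z m) (Cpow w m)) <= Q * (INR m * Q ^ (m - 1) * Cnorm (Csub z w))).
    { apply Rmult_le_compat; auto. apply cn_pos. }
    assert (Cnorm (Csub z w) * Cnorm w ^ m <= Cnorm (Csub z w) * Q ^ m) by (apply Rmult_le_compat_l; auto).
    nra.
Qed.

Definition Etay (z h : Cx) (m : nat) : Cx :=
  Csub (Csub (Cpow (Cadd z h) m) (Cpow z m)) (Cmul (INR m, 0) (Cmul (Cpow z (m - 1)) h)).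

Lemma Etay_rec (z h : Cx) (m : nat) :
  Etay z h (S m) = Cadd (Cmul (Cadd z h) (Etay z h m)) (Cmul (INR m, 0) (Cmul (Cpow z (m - 1)) (Cmul h h))).
Proof.
  unfold Etay. destruct m.
  - simpl. destruct z, h. unfold Csub, Cadd, Copp, Cmul. simpl. ceq.
  - replace (S (S m) - 1)%nat with (S m) by lia. replace (S m - 1)%nat with m by lia.
    rewrite (cpow_S (Cadd z h) (S m)), (cpow_S z (S m)), (cpow_S z m).
    rewrite (S_INR (S m)).
    generalize (Cpow (Cadd z h) (S m)) (Cpow z m). intros [p1 p2] [q1 q2]. destruct z, h.
    unfold Csub, Cadd, Copp, Cmul. ceq.
Qed.

Lemma Etay_bound (z h : Cx) (Q : R) (m : nat) :
  Cnorm z <= Q -> Cnorm (Cadd z h) <= Q -> Q <= 1 ->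
  Cnorm (Etay z h m) <= INR m ^ 2 * Q ^ (m - 2) * Cnorm h ^ 2.
Proof.
  intros Hz Hzh HQ1. assert (HQ : 0 <= Q) by (pose proof (cn_pos z); lra).
  pose proof (cn_pos h).
  induction m.
  - replace (Etay z h 0) with ((0, 0) : Cx)
      by (destruct h; unfold Etay, Csub, Cadd, Copp, Cmul; simpl; ceq).
    rewrite cn_zero. simpl. lra.
  - rewrite Etay_rec. eapply Rle_trans. apply cn_add. rewrite !cn_mul, cn_real, cn_pow, Rabs_right by (apply Rle_ge, pos_INR).
    pose proof (cn_pos (Etay z h m)).
    assert (T1 : Cnorm (Cadd z h) * Cnorm (Etay z h m) <= Q * (INR m ^ 2 * Q ^ (m - 2) * Cnorm h ^ 2)).
    { apply Rmult_le_compat; auto. apply cn_pos. }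
    assert (T2 : INR m * (Cnorm z ^ (m - 1) * (Cnorm h * Cnorm h)) <= INR m * (Q ^ (m - 1) * Cnorm h ^ 2)).
    { apply Rmult_le_compat_l; [apply pos_INR|]. simpl. rewrite Rmult_1_r.
      apply Rmult_le_compat_r; [nra|]. apply pow_incr. split; [apply cn_pos| auto]. }
    assert (T3 : Q * (INR m ^ 2 * Q ^ (m - 2)) <= INR m ^ 2 * Q ^ (S m - 2)).
    { destruct m. simpl. lra. destruct m. simpl. lra.
      replace (S (S (S m)) - 2)%nat with (S m) by lia. replace (S (S m) - 2)%nat with m by lia.
      simpl. lra. }
    assert (T4 : Q ^ (m - 1) <= Q ^ (S m - 2)) by (apply pow_anti; [lra| lia]).
    assert (T5 : INR m * Q ^ (m - 1) <= INR m * Q ^ (S m - 2)) by (apply Rmult_le_compat_l; [apply pos_INR| auto]).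
    rewrite S_INR. pose proof (pos_INR m). pose proof (pow_le Q (S m - 2) HQ).
    assert (0 <= Cnorm h ^ 2) by apply pow2_ge_0.
    assert (Q * (INR m ^ 2 * Q ^ (m - 2) * Cnorm h ^ 2) <= INR m ^ 2 * Q ^ (S m - 2) * Cnorm h ^ 2).
    { replace (Q * (INR m ^ 2 * Q ^ (m - 2) * Cnorm h ^ 2)) with ((Q * (INR m ^ 2 * Q ^ (m - 2))) * Cnorm h ^ 2) by ring.
      apply Rmult_le_compat_r; auto. }
    assert (INR m * (Q ^ (m - 1) * Cnorm h ^ 2) <= INR m * Q ^ (S m - 2) * Cnorm h ^ 2).
    { rewrite <- Rmult_assoc. apply Rmult_le_compat_r; auto. }
    assert (INR m ^ 2 * Q ^ (S m - 2) * Cnorm h ^ 2 + INR m * Q ^ (S m - 2) * Cnorm h ^ 2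
            <= (INR m + 1) ^ 2 * Q ^ (S m - 2) * Cnorm h ^ 2).
    { assert (0 <= Q ^ (S m - 2) * Cnorm h ^ 2) by (apply Rmult_le_pos; auto).
      nra. }
    lra.
Qed.

Lemma cn_tri2 (X Y : Cx) : Cnorm X <= Cnorm Y + Cnorm (Csub X Y).
Proof.
  replace X with (Cadd Y (Csub X Y)) at 1 by (destruct X, Y; unfold Csub, Cadd, Copp; ceq).
  apply cn_add.
Qed.

Lemma cn_tri3 (X Y x y : Cx) :
  Cnorm (Csub X Y) <= Cnorm (Csub X x) + Cnorm (Csub x y) + Cnorm (Csub y Y).
Proof.
  eapply Rle_trans. apply (cn_sub_tri X x Y). pose proof (cn_sub_tri x y Y). lra.
Qed.

Lemma r_pow_le (r : R) (m : nat) : 0 <= r <= 1 -> (1 <= m)%nat ->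
  r ^ (m - 1) <= 2 * ((1 + r) / 2) ^ m.
Proof.
  intros Hr Hm. destruct m as [|p]; [lia|]. replace (S p - 1)%nat with p by lia.
  simpl. assert (r ^ p <= ((1 + r) / 2) ^ p) by (apply pow_incr; lra).
  pose proof (pow_le ((1 + r) / 2) p ltac:(lra)). nra.
Qed.

Lemma cs_opt (S X Y : R) : 0 <= S -> 0 <= X -> 0 < Y ->
  (forall t, 0 < t -> S <= (t * X + Y / t) / 2) -> S ^ 2 <= X * Y.
Proof.
  intros HS HX HY H.
  destruct (Req_dec X 0) as [->|HX0].
  - destruct (Req_dec S 0) as [->|HS0]. { simpl. lra. }
    exfalso. specialize (H (Y / S) ltac:(apply Rdiv_lt_0_compat; lra)).
    replace ((Y / S * 0 + Y / (Y / S)) / 2) with (S / 2) in H by (field; lra). lra.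
  - assert (HXp : 0 < X) by lra.
    set (t := sqrt Y / sqrt X).
    assert (Hsx : 0 < sqrt X) by (apply sqrt_lt_R0; lra).
    assert (Hsy : 0 < sqrt Y) by (apply sqrt_lt_R0; lra).
    specialize (H t ltac:(unfold t; apply Rdiv_lt_0_compat; lra)).
    assert (E : (t * X + Y / t) / 2 = sqrt X * sqrt Y).
    { assert (EX : X = sqrt X * sqrt X) by (rewrite sqrt_sqrt; lra).
      assert (EY : Y = sqrt Y * sqrt Y) by (rewrite sqrt_sqrt; lra).
      rewrite EX at 1. rewrite EY at 1. unfold t. field. split; lra. }
    rewrite E in H.
    assert (S ^ 2 <= (sqrt X * sqrt Y) ^ 2) by (apply pow_incr; lra).
    replace ((sqrt X * sqrt Y) ^ 2) with (sqrt X ^ 2 * sqrt Y ^ 2) in H0 by ring.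
    rewrite !pow2_sqrt in H0 by lra. lra.
Qed.


Lemma sq_exp (y : R) : 0 <= y -> y ^ 2 <= 4 * exp y.
Proof.
  intros Hy. replace y with (y / 2 + y / 2) at 2 by field. rewrite exp_plus.
  pose proof (exp_ineq1_le (y / 2)). nra.
Qed.

Lemma ln2_le (x : R) : 0 <= x -> x ^ 2 <= 1 + x ^ 3.
Proof. intros Hx. destruct (Rle_dec x 1); nra. Qed.

Lemma log_term (I l nn : R) :
  0 < l <= 2 * PI -> 1 <= nn -> 0 <= I -> I <= nn * (l / (2 * PI)) -> I <= 2 ->
  I * ln (2 / l) ^ 2 <= (20 + 4 * ln PI ^ 2) * (1 + ln nn ^ 3).
Proof.
  intros Hl Hn HI HI1 HI2.
  pose proof PI_RGT_0 as HPI.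
  set (h := l / (2 * PI)).
  assert (Hh : 0 < h <= 1) by (unfold h; split; [apply Rdiv_lt_0_compat; lra| apply (Rmult_le_reg_r (2 * PI)); [lra|]; unfold Rdiv; rewrite Rmult_assoc, Rinv_l; lra]).
  set (L := ln (/ h)).
  assert (HL0 : 0 <= L) by (unfold L; rewrite <- ln_1; apply ln_le; [lra| rewrite <- Rinv_1; apply Rinv_le_contravar; lra]).
  assert (E : ln (2 / l) = L - ln PI).
  { unfold L, h. rewrite <- ln_div by (try apply Rinv_0_lt_compat; try apply Rdiv_lt_0_compat; lra).
    f_equal. field. lra. }
  set (ln_n := ln nn).
  assert (Hlnn : 0 <= ln_n) by (unfold ln_n; rewrite <- ln_1; apply ln_le; lra).
  assert (Key : I * L ^ 2 <= 2 * (1 + ln_n ^ 3) + 8).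
  { destruct (Rle_dec 1 (nn * h)) as [Hge|Hlt].
    - assert (L <= ln_n).
      { unfold L, ln_n. apply ln_le. apply Rinv_0_lt_compat; lra.
        apply (Rmult_le_reg_r h); [lra|]. rewrite Rinv_l by lra. lra. }
      assert (L ^ 2 <= ln_n ^ 2) by (apply pow_incr; lra).
      pose proof (ln2_le ln_n Hlnn).
      assert (I * L ^ 2 <= 2 * L ^ 2) by (apply Rmult_le_compat_r; [apply pow2_ge_0| lra]).
      lra.
    - set (x := nn * h). assert (Hx : 0 < x < 1) by (unfold x; split; [nra| lra]).
      set (y := - ln x).
      assert (Hlx : ln x < 0) by (rewrite <- ln_1; apply ln_increasing; lra).
      assert (Hy : 0 < y) by (unfold y; lra).
      assert (EL : L = ln_n + y).
      { unfold L, ln_n, y, x. rewrite ln_mult by lra. rewrite ln_Rinv by lra. ring. }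
      assert (Hxy : x * y ^ 2 <= 4).
      { assert (Ex : x = / exp y) by (unfold y; rewrite exp_Ropp, exp_ln by lra; field; lra).
        pose proof (sq_exp y ltac:(lra)). pose proof (exp_pos y). rewrite Ex.
        apply (Rmult_le_reg_r (exp y)); auto. field_simplify; lra. }
      assert (I * L ^ 2 <= x * L ^ 2) by (apply Rmult_le_compat_r; [apply pow2_ge_0| unfold x, h; lra]).
      assert (x * L ^ 2 <= 2 * x * ln_n ^ 2 + 2 * (x * y ^ 2)).
      { rewrite EL. assert (0 <= x * (ln_n - y) ^ 2) by (apply Rmult_le_pos; [lra| apply pow2_ge_0]). nra. }
      assert (x * ln_n ^ 2 <= ln_n ^ 2) by (assert (0 <= ln_n ^ 2) by apply pow2_ge_0; nra).
      pose proof (ln2_le ln_n Hlnn). lra. }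
  rewrite E.
  assert ((L - ln PI) ^ 2 <= 2 * L ^ 2 + 2 * ln PI ^ 2) by (pose proof (pow2_ge_0 (L + ln PI)); nra).
  assert (I * (L - ln PI) ^ 2 <= I * (2 * L ^ 2 + 2 * ln PI ^ 2)) by (apply Rmult_le_compat_l; auto).
  assert (I * (2 * ln PI ^ 2) <= 2 * (2 * ln PI ^ 2)) by (apply Rmult_le_compat_r; [pose proof (pow2_ge_0 (ln PI)); lra| lra]).
  assert (0 <= ln_n ^ 3) by (apply pow_le; auto).
  assert (0 <= ln PI ^ 2) by apply pow2_ge_0.
  fold ln_n.
  assert (4 * ln PI ^ 2 <= 4 * ln PI ^ 2 * (1 + ln_n ^ 3)) by nra.
  nra.
Qed.


Lemma phi_is_RInt (m : nat) (c rho : R) :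
  is_RInt (fun r => INR m * ((1 + r) / 2) ^ m) c rho
    (2 * INR m / (INR m + 1) * ((1 + rho) / 2) ^ (S m) - 2 * INR m / (INR m + 1) * ((1 + c) / 2) ^ (S m)).
Proof.
  assert (Hm : 0 < INR m + 1) by (pose proof (pos_INR m); lra).
  apply (is_RInt_derive (V := R_CompleteNormedModule) (fun r => 2 * INR m / (INR m + 1) * ((1 + r) / 2) ^ (S m))).
  - intros x _. auto_derive; auto.
    replace (match m with | 0%nat => 1 | S _ => INR m + 1 end) with (INR m + 1) by (destruct m; simpl; ring).
    change ((1 + x) * / 2) with ((1 + x) / 2). set (P := ((1 + x) / 2) ^ m). field. lra.
  - intros x _. apply (ex_derive_continuous (K := R_AbsRing) (V := R_NormedModule)). auto_derive. auto.
Qed.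

Lemma phi_int (m : nat) (c rho : R) : 0 <= c <= rho -> rho <= 1 -> (1 <= m)%nat ->
  0 <= RInt (fun r => INR m * ((1 + r) / 2) ^ m) c rho /\
  RInt (fun r => INR m * ((1 + r) / 2) ^ m) c rho <= INR m * (rho - c) /\
  RInt (fun r => INR m * ((1 + r) / 2) ^ m) c rho <= 2.
Proof.
  intros Hc Hr Hm. pose proof (phi_is_RInt m c rho) as H.
  assert (Hm0 : 1 <= INR m) by (replace 1 with (INR 1) by reflexivity; apply le_INR; auto).
  assert (Hmid : RInt (fun r => INR m * ((1 + r) / 2) ^ m) c rho <= INR m * (rho - c)).
  { eapply Rle_trans; [apply Rle_abs|]. rewrite Rmult_comm.
    apply abs_RInt_le_const; [lra| eexists; exact H|].
    intros t Ht. rewrite Rabs_right.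
    - assert (((1 + t) / 2) ^ m <= 1) by (apply pow_le1; lra). apply Rle_trans with (INR m * 1); [apply Rmult_le_compat_l; lra| lra].
    - apply Rle_ge, Rmult_le_pos; [lra| apply pow_le; lra]. }
  rewrite (is_RInt_unique _ _ _ _ H) in *.
  set (P := fun x => ((1 + x) / 2) ^ (S m)).
  assert (HP : P c <= P rho) by (unfold P; apply pow_incr; lra).
  assert (HP0 : 0 <= P c) by (unfold P; apply pow_le; lra).
  assert (HP1 : P rho <= 1) by (unfold P; apply pow_le1; lra).
  assert (Hk : 0 <= 2 * INR m / (INR m + 1) <= 2).
  { split. apply Rdiv_le_0_compat; lra. apply (Rmult_le_reg_r (INR m + 1)); [lra|].
    unfold Rdiv. rewrite Rmult_assoc, Rinv_l by lra. lra. }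
  fold (P rho) (P c) in *. split; [|split].
  - nra.
  - exact Hmid.
  - nra.
Qed.




Lemma inv_sq_sum (N : nat) : sum_f_R0 (fun k => / INR (S k) ^ 2) N <= 2 - / INR (S N).
Proof.
  induction N.
  - simpl. lra.
  - rewrite tech5. assert (0 < INR (S N)) by (apply lt_0_INR; lia).
    rewrite (S_INR (S N)). set (x := INR (S N)) in *.
    assert (/ (x + 1) ^ 2 <= / x - / (x + 1)).
    { replace (/ x - / (x + 1)) with (/ (x * (x + 1))) by (field; lra).
      apply Rinv_le_contravar. nra. nra. }
    lra.
Qed.

Lemma amgm (x w : R) : 0 < w -> x <= (x ^ 2 * w + / w) / 2.
Proof.
  intros Hw. assert (0 <= (x * w - 1) ^ 2 / w) by (apply Rdiv_le_0_compat; [apply pow2_ge_0|lra]).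
  replace ((x ^ 2 * w + / w) / 2) with (x + ((x * w - 1) ^ 2 / w) / 2) by (field; lra). lra.
Qed.


Lemma psum_last (b : nat -> R) (m : nat) : (forall k, 0 <= b k) -> b m <= sum_f_R0 b m.
Proof. intros Hb. destruct m; simpl; [lra|]. pose proof (psum_nonneg b m Hb). lra. Qed.

Lemma sub_sum (b : nat -> R) (sg : nat -> nat) (N : nat) :
  (forall k, 0 <= b k) -> (forall k, (sg k < sg (S k))%nat) ->
  sum_f_R0 (fun k => b (sg k)) N <= sum_f_R0 b (sg N).
Proof.
  intros Hb Hs. induction N.
  - simpl. apply psum_last; auto.
  - simpl. specialize (Hs N). destruct (sg (S N)) as [|p] eqn:E; [lia|].
    simpl. assert (sum_f_R0 b (sg N) <= sum_f_R0 b p) by (apply psum_mono; auto; lia). lra.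
Qed.

Lemma telescope (p : nat -> R) (N : nat) :
  sum_f_R0 (fun k => p (S k) - p k) N = p (S N) - p O.
Proof. induction N; simpl; [ring| rewrite IHN; ring]. Qed.

Lemma cube_series (Q : R) : 0 < Q < 1 ->
  exists T, forall M, sum_f_R0 (fun m => INR m ^ 3 * Q ^ (m - 2)) M <= T.
Proof.
  intros HQ.
  set (v := fun j => INR (j + 2) ^ 3 * Q ^ j).
  assert (Hv0 : forall j, 0 < v j).
  { intros j. unfold v. apply Rmult_lt_0_compat; apply pow_lt; [apply lt_0_INR; lia| lra]. }
  assert (Hlim : is_lim_seq (fun j => Rabs (v (S j) / v j)) Q).
  { assert (H1 : is_lim_seq (fun j => / INR (j + 2)) 0).
    { apply (is_lim_seq_incr_n (fun j => / INR j) 2 0).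
      replace (Finite 0) with (Rbar_inv p_infty) by reflexivity.
      apply is_lim_seq_inv. apply is_lim_seq_INR. discriminate. }
    assert (H2 : is_lim_seq (fun j => 1 + / INR (j + 2)) 1).
    { assert (H2' := is_lim_seq_plus' _ _ 1 0 (is_lim_seq_const 1) H1). rewrite Rplus_0_r in H2'. exact H2'. }
    assert (H3 : is_lim_seq (fun j => (1 + / INR (j + 2)) * (1 + / INR (j + 2)) * (1 + / INR (j + 2)) * Q) Q).
    { assert (H3' := is_lim_seq_mult' _ _ _ _ (is_lim_seq_mult' _ _ _ _ (is_lim_seq_mult' _ _ _ _ H2 H2) H2) (is_lim_seq_const Q)).
      rewrite !Rmult_1_l in H3'. exact H3'. }
    eapply is_lim_seq_ext; [| exact H3].
    intros j. symmetry. unfold v. rewrite Rabs_right.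
    2: { apply Rle_ge. apply Rdiv_le_0_compat. apply Rlt_le, Rmult_lt_0_compat; apply pow_lt; [apply lt_0_INR; lia| lra].
         apply Rmult_lt_0_compat; apply pow_lt; [apply lt_0_INR; lia| lra]. }
    replace (S j + 2)%nat with (S (j + 2)) by lia. rewrite S_INR.
    assert (0 < INR (j + 2)) by (apply lt_0_INR; lia).
    simpl. field. repeat split; try lra; try (apply pow_nonzero; lra). }
  destruct (ex_series_DAlembert v Q ltac:(lra) (fun j => Rgt_not_eq _ _ (Hv0 j)) Hlim) as [T0 HT0].
  apply is_series_Reals in HT0.
  assert (HT0' : infinite_sum v T0).
  { intros eps Heps. destruct (HT0 eps Heps) as [N HN]. exists N. intros m Hm.
    specialize (HN m Hm). unfold R_dist in *.
    replace (sum_f_R0 v m) with (sum_f_R0 (fun j => Rabs (v j)) m); auto.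
    apply sum_eq. intros. apply Rabs_right. apply Rle_ge, Rlt_le, Hv0. }
  exists (1 + T0). intros M.
  set (u := fun m => INR m ^ 3 * Q ^ (m - 2)).
  assert (Hu : forall m, 0 <= u m).
  { intros m. unfold u. apply Rmult_le_pos; apply pow_le; [apply pos_INR| lra]. }
  assert (E : forall J, sum_f_R0 u (S (S J)) = 1 + sum_f_R0 v J).
  { induction J.
    - unfold u, v. simpl. ring.
    - rewrite tech5, IHJ. simpl sum_f_R0 at 2. unfold u, v.
      replace (S (S (S J)) - 2)%nat with (S J) by lia.
      replace (S J + 2)%nat with (S (S (S J))) by lia. ring. }
  eapply Rle_trans. apply (psum_mono u M (S (S M)) Hu). lia.
  rewrite E. pose proof (psum_le_lim v T0 (fun j => Rlt_le _ _ (Hv0 j)) HT0' M). lra.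
Qed.

Lemma bern (v : R) (m : nat) : 0 <= v ->
  1 + INR m * v + INR m * (INR m - 1) / 2 * v ^ 2 <= (1 + v) ^ m.
Proof.
  intros Hv. induction m.
  - simpl. lra.
  - rewrite S_INR. simpl pow. pose proof (pos_INR m).
    assert (0 <= INR m * (INR m - 1) / 2 * v ^ 3).
    { destruct m. simpl. lra. rewrite S_INR. pose proof (pos_INR m).
      apply Rmult_le_pos; [| apply pow_le; lra]. apply Rmult_le_pos; [|lra]. nra. }
    nra.
Qed.

Lemma sq_decay (s : R) (m : nat) : 0 < s < 1 ->
  (INR m * (1 - s)) ^ 2 * s ^ m <= 2.
Proof.
  intros Hs. set (v := / s - 1). set (u := 1 - s).
  assert (Hvu : u <= v).
  { unfold u, v. assert (/ s >= 1 + (1 - s)).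
    { apply Rle_ge. apply (Rmult_le_reg_r s); [lra|]. rewrite Rinv_l by lra. nra. } lra. }
  assert (Hu : 0 < u <= 1) by (unfold u; lra).
  assert (Hb := bern v m ltac:(lra)).
  assert (E : (1 + v) ^ m * s ^ m = 1).
  { rewrite <- Rpow_mult_distr. unfold v. replace ((1 + (/ s - 1)) * s) with 1 by (field; lra).
    apply pow1. }
  pose proof (pos_INR m).
  assert (Hm2 : (INR m * u) ^ 2 <= 2 * (1 + INR m * v + INR m * (INR m - 1) / 2 * v ^ 2)).
  { destruct m. { simpl. lra. }
    rewrite S_INR in *. set (x := INR m) in *. assert (0 <= x) by apply pos_INR.
    assert (Huv : u * u <= v) by nra.
    assert (H1 : (x + 1) * (u * u) <= (x + 1) * v) by (apply Rmult_le_compat_l; lra).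
    assert (H2 : x * (x + 1) * (u * u) <= x * (x + 1) * (v * v)) by (apply Rmult_le_compat_l; nra).
    assert (0 <= (x + 1) * v) by nra.
    replace (((x + 1) * u) ^ 2) with (x * (x + 1) * (u * u) + (x + 1) * (u * u)) by ring.
    replace (2 * (1 + (x + 1) * v + (x + 1) * (x + 1 - 1) / 2 * v ^ 2))
      with (2 + 2 * ((x + 1) * v) + x * (x + 1) * (v * v)) by field.
    lra. }
  assert (0 < s ^ m) by (apply pow_lt; lra).
  apply (Rmult_le_compat_r (s ^ m)) in Hm2; [|lra].
  apply (Rmult_le_compat_r (s ^ m)) in Hb; [|lra]. rewrite E in Hb.
  fold u. nra.
Qed.

Lemma psi_step (lam x x' S : R) : 1 < lam -> 0 <= x -> lam * x <= x' -> 0 < S <= 1 -> x ^ 2 * S <= 2 ->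
  x * S <= (10 * lam / (lam - 1)) * (x' / (1 + x') - x / (1 + x)).
Proof.
  intros Hl Hx Hx' HS Hx2.
  assert (Hmono : lam * x / (1 + lam * x) <= x' / (1 + x')).
  { assert (0 <= lam * x) by nra.
    assert (E2 : x' / (1 + x') - lam * x / (1 + lam * x) = (x' - lam * x) / ((1 + x') * (1 + lam * x))).
    { field. split; lra. }
    assert (0 <= (x' - lam * x) / ((1 + x') * (1 + lam * x))).
    { apply Rdiv_le_0_compat; [lra| apply Rmult_lt_0_compat; lra]. }
    lra. }
  assert (E : lam * x / (1 + lam * x) - x / (1 + x) = (lam - 1) * x / ((1 + lam * x) * (1 + x))).
  { field. nra. }
  assert (x * S * ((1 + lam * x) * (1 + x)) <= 10 * lam * x).
  { assert (Ha : 1 + lam * x <= lam * (1 + x)) by lra.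
    assert (Hb : (1 + lam * x) * (1 + x) <= lam * (1 + x) * (1 + x)) by (apply Rmult_le_compat_r; lra).
    assert (Hc : (1 + x) * (1 + x) <= 2 * (1 + x ^ 2)) by (pose proof (pow2_ge_0 (x - 1)); nra).
    assert (Hd : (1 + lam * x) * (1 + x) <= 2 * lam * (1 + x ^ 2)) by nra.
    assert (He : S * (1 + x ^ 2) <= 3) by nra.
    assert (Hf : S * ((1 + lam * x) * (1 + x)) <= 6 * lam).
    { apply Rle_trans with (S * (2 * lam * (1 + x ^ 2))). apply Rmult_le_compat_l; lra. nra. }
    assert (Hg : x * (S * ((1 + lam * x) * (1 + x))) <= x * (10 * lam)) by (apply Rmult_le_compat_l; lra).
    nra. }
  assert (x * S <= (10 * lam / (lam - 1)) * ((lam - 1) * x / ((1 + lam * x) * (1 + x)))).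
  { replace ((10 * lam / (lam - 1)) * ((lam - 1) * x / ((1 + lam * x) * (1 + x))))
      with (10 * lam * x / ((1 + lam * x) * (1 + x))) by (field; nra).
    apply (Rmult_le_reg_r ((1 + lam * x) * (1 + x))). nra.
    unfold Rdiv. rewrite (Rmult_assoc (10 * lam * x) (/ ((1 + lam * x) * (1 + x)))), Rinv_l by nra. lra. }
  assert (0 < 10 * lam / (lam - 1)) by (apply Rdiv_lt_0_compat; lra).
  nra.
Qed.

Section Main.
Variables (a : nat -> Cx) (n : nat -> nat) (lambda : R).
Hypothesis Hn_pos : forall k, (0 < n k)%nat.
Hypothesis Hlam : 1 < lambda.
Hypothesis Hgap : forall k, INR (n (S k)) >= lambda * INR (n k).

Definition A (k : nat) : R := Cnorm (a k).
Definition W (k : nat) : R := Cnorm (a k) ^ 2 * ln (INR (n k)) ^ 3.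

Lemma A_pos k : 0 <= A k.
Proof. apply cn_pos. Qed.

Lemma n_ge1 k : 1 <= INR (n k).
Proof. replace 1 with (INR 1) by reflexivity. apply le_INR. apply Hn_pos. Qed.

Lemma n_pow k : lambda ^ k <= INR (n k).
Proof.
  induction k.
  - simpl. apply n_ge1.
  - simpl. specialize (Hgap k). nra.
Qed.

Lemma n_strict k : (n k < n (S k))%nat.
Proof.
  apply INR_lt. specialize (Hgap k). pose proof (n_ge1 k). nra.
Qed.

Lemma n_mono k m : (k <= m)%nat -> (n k <= n m)%nat.
Proof. intros H. induction H; [lia|]. pose proof (n_strict m). lia. Qed.

Lemma ln_n_ge k : INR k * ln lambda <= ln (INR (n k)).
Proof.
  rewrite <- ln_pow by lra. apply ln_le. apply pow_lt; lra. apply n_pow.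
Qed.

Lemma ln_n_pos k : 0 <= ln (INR (n k)).
Proof. rewrite <- ln_1. apply ln_le; [lra| apply n_ge1]. Qed.

Lemma W_pos k : 0 <= W k.
Proof. unfold W. apply Rmult_le_pos; [apply pow2_ge_0| apply pow_le, ln_n_pos]. Qed.

Hypothesis HW : exists SW, infinite_sum W SW.

Lemma A_bounded : exists M, 0 <= M /\ forall N, sum_f_R0 A N <= M.
Proof.
  destruct HW as [SW HSW].
  set (mu := ln lambda).
  assert (Hmu : 0 < mu) by (unfold mu; rewrite <- ln_1; apply ln_increasing; lra).
  set (c := / mu ^ 3).
  assert (Hc : 0 < c) by (unfold c; apply Rinv_0_lt_compat, pow_lt; lra).
  set (b := fun k => (match k with O => A O | S _ => 0 end) + (W k + c * 4 * / INR (S k) ^ 2) / 2).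
  assert (Hb : forall k, A k <= b k).
  { intros [|k]; unfold b.
    - pose proof (W_pos 0). assert (0 <= c * 4 * / INR 1 ^ 2).
      { apply Rmult_le_pos; [lra| apply Rlt_le, Rinv_0_lt_compat, pow_lt, lt_0_INR; lia]. } lra.
    - set (L := ln (INR (n (S k)))).
      assert (HL : INR (S k) * mu <= L) by apply ln_n_ge.
      assert (HSk : 1 <= INR (S k)) by (rewrite S_INR; pose proof (pos_INR k); lra).
      assert (HL0 : 0 < L) by nra.
      eapply Rle_trans. apply (amgm (A (S k)) (L ^ 3)). apply pow_lt; auto.
      unfold W. fold (A (S k)). fold L.
      assert (/ L ^ 3 <= c * 4 * / INR (S (S k)) ^ 2).
      { unfold c. rewrite S_INR. set (x := INR (S k)) in *.
        assert (x * mu <= L) by exact HL.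
        assert (/ L ^ 3 <= / (x * mu) ^ 3).
        { apply Rinv_le_contravar. apply pow_lt; nra. apply pow_incr; nra. }
        assert (/ (x * mu) ^ 3 <= / mu ^ 3 * 4 * / (x + 1) ^ 2).
        { rewrite Rpow_mult_distr, Rinv_mult.
          assert (/ x ^ 3 <= 4 * / (x + 1) ^ 2).
          { apply (Rmult_le_reg_r (x ^ 3 * (x + 1) ^ 2)). apply Rmult_lt_0_compat; apply pow_lt; lra.
            field_simplify; try (split; apply pow_nonzero || lra); try lra.
            all: try (apply pow_nonzero; lra).
            nra. }
          assert (0 < / mu ^ 3) by (apply Rinv_0_lt_compat, pow_lt; lra).
          nra. }
        lra. }
      lra. }
  exists (A 0 + (SW + c * 4 * 2) / 2). split.
  { pose proof (A_pos 0). assert (0 <= SW).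
    { eapply Rle_trans; [| apply (psum_le_lim W SW W_pos HSW 0)]. apply W_pos. }
    lra. }
  intros N. eapply Rle_trans. apply (psum_le A b N Hb).
  unfold b. rewrite plus_sum.
  assert (E1 : sum_f_R0 (fun k => match k with O => A O | S _ => 0 end) N = A 0).
  { induction N; simpl; auto. rewrite IHN. lra. }
  rewrite E1.
  assert (sum_f_R0 (fun k => (W k + c * 4 * / INR (S k) ^ 2) / 2) N <= (SW + c * 4 * 2) / 2).
  { replace (fun k => (W k + c * 4 * / INR (S k) ^ 2) / 2) with
      (fun k => W k * / 2 + (/ INR (S k) ^ 2) * (c * 4 / 2)).
    2: { apply functional_extensionality; intros k. field. apply not_0_INR; lia. }
    rewrite plus_sum, <- !scal_sum.
    pose proof (psum_le_lim W SW W_pos HSW N). pose proof (inv_sq_sum N).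
    assert (0 < / INR (S N)) by (apply Rinv_0_lt_compat, lt_0_INR; lia).
    nra. }
  lra.
Qed.

Lemma lacunary (s : R) (N : nat) : 0 < s < 1 ->
  sum_f_R0 (fun k => INR (n k) * s ^ (n k)) N <= (10 * lambda / (lambda - 1)) / (1 - s).
Proof.
  intros Hs. set (u := 1 - s). assert (Hu : 0 < u) by (unfold u; lra).
  set (x := fun k => INR (n k) * u).
  set (p := fun k => x k / (1 + x k)).
  assert (Hx : forall k, 0 <= x k) by (intros k; unfold x; pose proof (n_ge1 k); nra).
  assert (Hterm : forall k, INR (n k) * s ^ (n k) <= (10 * lambda / (lambda - 1)) * (p (S k) - p k) / u).
  { intros k. apply (Rmult_le_reg_r u); auto.
    replace ((10 * lambda / (lambda - 1)) * (p (S k) - p k) / u * u)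
      with ((10 * lambda / (lambda - 1)) * (p (S k) - p k)) by (field; split; lra).
    unfold p.
    replace (INR (n k) * s ^ n k * u) with (x k * s ^ n k) by (unfold x; ring).
    apply psi_step; auto.
    - unfold x. specialize (Hgap k). nra.
    - split; [apply pow_lt; lra| apply pow_le1; lra].
    - unfold x. apply sq_decay; auto. }
  eapply Rle_trans. apply (psum_le _ _ N Hterm).
  replace (fun k => 10 * lambda / (lambda - 1) * (p (S k) - p k) / u)
    with (fun k => (p (S k) - p k) * (10 * lambda / (lambda - 1) / u)).
  2: { apply functional_extensionality. intros k. field. split; lra. }
  rewrite <- scal_sum, telescope.
  assert (0 <= p 0%nat) by (unfold p; apply Rdiv_le_0_compat; [apply Hx| pose proof (Hx 0%nat); lra]).
  assert (p (S N) <= 1).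
  { unfold p. pose proof (Hx (S N)). apply (Rmult_le_reg_r (1 + x (S N))); [lra|].
    unfold Rdiv. rewrite Rmult_assoc, Rinv_l by lra. lra. }
  assert (0 < 10 * lambda / (lambda - 1) / u) by (apply Rdiv_lt_0_compat; [apply Rdiv_lt_0_compat|]; lra).
  fold u. unfold Rdiv at 3. nra.
Qed.

Lemma master (Q : R) : 0 < Q < 1 ->
  exists T, 0 <= T /\ forall N, sum_f_R0 (fun k => INR (n k) ^ 3 * Q ^ (n k - 2)) N <= T.
Proof.
  intros HQ. destruct (cube_series Q HQ) as [T HT]. exists T. split.
  - eapply Rle_trans; [| apply (HT O)]. simpl. lra.
  - intros N. eapply Rle_trans. apply (sub_sum (fun m => INR m ^ 3 * Q ^ (m - 2)) n N).
    + intros m. apply Rmult_le_pos; apply pow_le; [apply pos_INR| lra].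
    + apply n_strict.
    + apply HT.
Qed.


Lemma A_M : exists M, 0 <= M /\ (forall N, sum_f_R0 A N <= M) /\ (forall k, A k <= M).
Proof.
  destruct A_bounded as [M [HM HS]]. exists M. repeat split; auto.
  intros k. eapply Rle_trans; [| apply (HS k)]. apply psum_last. apply A_pos.
Qed.

Lemma wsum (Q : R) (w : nat -> R) : 0 < Q < 1 ->
  (forall k, 0 <= w k <= INR (n k) ^ 3 * Q ^ (n k - 2)) ->
  exists B, 0 <= B /\ forall N, sum_f_R0 (fun k => A k * w k) N <= B.
Proof.
  intros HQ Hw. destruct A_M as [M [HM [_ HAk]]].
  destruct (master Q HQ) as [T [HT HTs]].
  exists (M * T). split; [apply Rmult_le_pos; auto|]. intros N.
  eapply Rle_trans. apply (psum_le _ (fun k => (INR (n k) ^ 3 * Q ^ (n k - 2)) * M)).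
  - intros k. specialize (Hw k). pose proof (A_pos k). specialize (HAk k).
    rewrite Rmult_comm. apply Rmult_le_compat; lra.
  - rewrite <- scal_sum. apply Rmult_le_compat_l; auto.
Qed.

Lemma w1_ok (Q : R) k : 0 < Q < 1 ->
  0 <= INR (n k) * Q ^ (n k - 1) <= INR (n k) ^ 3 * Q ^ (n k - 2).
Proof.
  intros HQ. pose proof (n_ge1 k). split.
  - apply Rmult_le_pos; [lra| apply pow_le; lra].
  - apply Rmult_le_compat; [lra| apply pow_le; lra| |apply pow_anti; [lra| lia]].
    simpl. nra.
Qed.

Lemma w2_ok (Q : R) k : 0 < Q < 1 ->
  0 <= INR (n k) * INR (n k) * Q ^ (n k - 2) <= INR (n k) ^ 3 * Q ^ (n k - 2).
Proof.
  intros HQ. pose proof (n_ge1 k). pose proof (pow_le Q (n k - 2) ltac:(lra)). split.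
  - apply Rmult_le_pos; [nra| auto].
  - apply Rmult_le_compat_r; auto. simpl. nra.
Qed.

Variable f : Cx -> Cx.
Hypothesis Hf_series : forall z, inD z ->
      Un_cv (fun N => Cnorm (Csub (lac_psum a n z N) (f z))) 0.

Definition term (z : Cx) (k : nat) : Cx := Cmul (a k) (Cpow z (n k)).
Definition dterm (z : Cx) (k : nat) : Cx := Cmul (a k) (Cmul (INR (n k), 0) (Cpow z (n k - 1))).
Definition Dser (z : Cx) : Cx := climit (dterm z).

Lemma psum_cv (z : Cx) : inD z -> Un_cv (fun N => Cnorm (Csub (csum (term z) N) (f z))) 0.
Proof.
  intros Hz. pose proof (Hf_series z Hz) as H.
  intros eps Heps. destruct (H eps Heps) as [N HN]. exists N. intros m Hm.
  specialize (HN m Hm). rewrite lac_psum_csum in HN. exact HN.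
Qed.

Lemma cn_term (z : Cx) k : Cnorm (term z k) = A k * Cnorm z ^ n k.
Proof. unfold term. rewrite cn_mul, cn_pow. reflexivity. Qed.

Lemma cn_dterm (z : Cx) k : Cnorm (dterm z k) = A k * (INR (n k) * Cnorm z ^ (n k - 1)).
Proof. unfold dterm. rewrite !cn_mul, cn_pow, cn_real, Rabs_right. reflexivity. apply Rle_ge, pos_INR. Qed.

Lemma f_bound : exists M, 0 <= M /\ forall z, inD z -> Cnorm (f z) <= M.
Proof.
  destruct A_M as [M [HM [HS _]]]. exists M. split; auto. intros z Hz.
  apply (le_cv0 (fun N => Cnorm (Csub (csum (term z) N) (f z)))). apply psum_cv; auto.
  intros N. eapply Rle_trans. apply (cn_tri2 (f z) (csum (term z) N)).
  rewrite cn_sub_sym. apply Rplus_le_compat_r.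
  eapply Rle_trans. apply cn_csum. eapply Rle_trans; [| apply (HS N)].
  apply psum_le. intros k. rewrite cn_term. pose proof (A_pos k).
  assert (Cnorm z ^ n k <= 1) by (apply pow_le1; split; [apply cn_pos| unfold inD in Hz; lra]).
  nra.
Qed.

Lemma f_lip (Q : R) : 0 < Q < 1 ->
  exists L, 0 <= L /\ forall z w, Cnorm z <= Q -> Cnorm w <= Q ->
    Cnorm (Csub (f z) (f w)) <= L * Cnorm (Csub z w).
Proof.
  intros HQ. destruct (wsum Q _ HQ (fun k => w1_ok Q k HQ)) as [B [HB HBs]].
  exists B. split; auto. intros z w Hz Hw.
  assert (Hz' : inD z) by (unfold inD; lra). assert (Hw' : inD w) by (unfold inD; lra).
  apply (le_cv0 (fun N => Cnorm (Csub (csum (term z) N) (f z)) + Cnorm (Csub (csum (term w) N) (f w)))).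
  { apply cv0_plus; apply psum_cv; auto. }
  intros N. eapply Rle_trans. apply (cn_tri3 (f z) (f w) (csum (term z) N) (csum (term w) N)).
  rewrite (cn_sub_sym (f z)).
  assert (Cnorm (Csub (csum (term z) N) (csum (term w) N)) <= B * Cnorm (Csub z w)).
  { rewrite csum_sub. eapply Rle_trans. apply cn_csum.
    eapply Rle_trans. apply (psum_le _ (fun k => (A k * (INR (n k) * Q ^ (n k - 1))) * Cnorm (Csub z w))).
    - intros k. unfold term.
      replace (Csub (Cmul (a k) (Cpow z (n k))) (Cmul (a k) (Cpow w (n k))))
        with (Cmul (a k) (Csub (Cpow z (n k)) (Cpow w (n k)))).
      2: { generalize (Cpow z (n k)) (Cpow w (n k)). intros [] []. destruct (a k). unfold Csub, Cmul, Cadd, Copp. ceq. }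
      rewrite cn_mul. fold (A k). rewrite Rmult_assoc. apply Rmult_le_compat_l. apply A_pos.
      apply cpow_diff; auto.
    - rewrite <- scal_sum. rewrite Rmult_comm. apply Rmult_le_compat_r. apply cn_pos. apply HBs. }
  lra.
Qed.

Lemma dterm_sum (Q : R) : 0 < Q < 1 ->
  exists B, 0 <= B /\ forall z N, Cnorm z <= Q -> sum_f_R0 (fun k => Cnorm (dterm z k)) N <= B.
Proof.
  intros HQ. destruct (wsum Q _ HQ (fun k => w1_ok Q k HQ)) as [B [HB HBs]].
  exists B. split; auto. intros z N Hz. eapply Rle_trans; [| apply (HBs N)].
  apply psum_le. intros k. rewrite cn_dterm. apply Rmult_le_compat_l. apply A_pos.
  apply Rmult_le_compat_l. apply pos_INR. apply pow_incr. split; [apply cn_pos| auto].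
Qed.

Lemma D_cv (z : Cx) : Cnorm z < 1 -> Un_cv (fun N => Cnorm (Csub (csum (dterm z) N) (Dser z))) 0.
Proof.
  intros Hz. set (Q := (1 + Cnorm z) / 2). pose proof (cn_pos z).
  assert (HQ : 0 < Q < 1) by (unfold Q; lra).
  destruct (dterm_sum Q HQ) as [B [HB HBs]].
  apply climit_cv. apply (bounded_cv _ B). intros; apply cn_pos.
  intros N. apply HBs. unfold Q; lra.
Qed.

Lemma D_bound (Q : R) : 0 < Q < 1 ->
  exists L, 0 <= L /\ forall z, Cnorm z <= Q -> Cnorm (Dser z) <= L.
Proof.
  intros HQ. destruct (dterm_sum Q HQ) as [B [HB HBs]]. exists B. split; auto.
  intros z Hz. apply (le_cv0 (fun N => Cnorm (Csub (csum (dterm z) N) (Dser z)))).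
  apply D_cv; lra.
  intros N. eapply Rle_trans. apply (cn_tri2 (Dser z) (csum (dterm z) N)).
  rewrite cn_sub_sym. apply Rplus_le_compat_r. eapply Rle_trans. apply cn_csum. auto.
Qed.

Lemma D_lip (Q : R) : 0 < Q < 1 ->
  exists L, 0 <= L /\ forall z w, Cnorm z <= Q -> Cnorm w <= Q ->
    Cnorm (Csub (Dser z) (Dser w)) <= L * Cnorm (Csub z w).
Proof.
  intros HQ. destruct (wsum Q _ HQ (fun k => w2_ok Q k HQ)) as [B [HB HBs]].
  exists B. split; auto. intros z w Hz Hw.
  apply (le_cv0 (fun N => Cnorm (Csub (csum (dterm z) N) (Dser z)) + Cnorm (Csub (csum (dterm w) N) (Dser w)))).
  { apply cv0_plus; apply D_cv; lra. }
  intros N. eapply Rle_trans. apply (cn_tri3 (Dser z) (Dser w) (csum (dterm z) N) (csum (dterm w) N)).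
  rewrite (cn_sub_sym (Dser z)).
  assert (Cnorm (Csub (csum (dterm z) N) (csum (dterm w) N)) <= B * Cnorm (Csub z w)).
  { rewrite csum_sub. eapply Rle_trans. apply cn_csum.
    eapply Rle_trans. apply (psum_le _ (fun k => (A k * (INR (n k) * INR (n k) * Q ^ (n k - 2))) * Cnorm (Csub z w))).
    - intros k. unfold dterm.
      replace (Csub (Cmul (a k) (Cmul (INR (n k), 0) (Cpow z (n k - 1)))) (Cmul (a k) (Cmul (INR (n k), 0) (Cpow w (n k - 1)))))
        with (Cmul (a k) (Cmul (INR (n k), 0) (Csub (Cpow z (n k - 1)) (Cpow w (n k - 1))))).
      2: { generalize (Cpow z (n k - 1)) (Cpow w (n k - 1)). intros [] []. destruct (a k). unfold Csub, Cmul, Cadd, Copp. ceq. }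
      rewrite !cn_mul, cn_real, Rabs_right by (apply Rle_ge, pos_INR). fold (A k).
      assert (Hd : Cnorm (Csub (Cpow z (n k - 1)) (Cpow w (n k - 1))) <= INR (n k) * Q ^ (n k - 2) * Cnorm (Csub z w)).
      { eapply Rle_trans. apply (cpow_diff z w Q (n k - 1)); auto.
        replace (n k - 1 - 1)%nat with (n k - 2)%nat by lia.
        apply Rmult_le_compat_r. apply cn_pos. apply Rmult_le_compat_r. apply pow_le; lra.
        apply le_INR. lia. }
      replace (A k * (INR (n k) * INR (n k) * Q ^ (n k - 2)) * Cnorm (Csub z w))
        with (A k * (INR (n k) * (INR (n k) * Q ^ (n k - 2) * Cnorm (Csub z w)))) by ring.
      apply Rmult_le_compat_l. apply A_pos. apply Rmult_le_compat_l. apply pos_INR. exact Hd.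
    - rewrite <- scal_sum. rewrite Rmult_comm. apply Rmult_le_compat_r. apply cn_pos. apply HBs. }
  lra.
Qed.

Lemma f_deriv (z : Cx) : inD z -> has_cderiv f z (Dser z).
Proof.
  intros Hz eps Heps. unfold inD in Hz. pose proof (cn_pos z) as Hr.
  remember (Cnorm z) as r eqn:Er. set (Q := (1 + r) / 2).
  assert (HQ : 0 < Q < 1) by (unfold Q; lra).
  destruct (wsum Q _ HQ (fun k => w2_ok Q k HQ)) as [B [HB HBs]].
  exists (Rmin ((1 - r) / 2) (eps / (B + 1))). split.
  { apply Rmin_pos; [lra| apply Rdiv_lt_0_compat; lra]. }
  intros h Hh.
  assert (Hh1 : Cnorm h < (1 - r) / 2) by (eapply Rlt_le_trans; [exact Hh| apply Rmin_l]).
  assert (Hh2 : Cnorm h < eps / (B + 1)) by (eapply Rlt_le_trans; [exact Hh| apply Rmin_r]).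
  pose proof (cn_pos h) as Hh0.
  assert (Hzh : Cnorm (Cadd z h) <= Q) by (pose proof (cn_add z h); unfold Q; rewrite <- Er in *; lra).
  assert (HzQ : Cnorm z <= Q) by (rewrite <- Er; unfold Q; lra).
  set (X := Csub (Csub (f (Cadd z h)) (f z)) (Cmul (Dser z) h)).
  assert (Main : Cnorm X <= B * Cnorm h ^ 2).
  { apply (le_cv0 (fun N => Cnorm (Csub (csum (term (Cadd z h)) N) (f (Cadd z h)))
                          + Cnorm (Csub (csum (term z) N) (f z))
                          + Cnorm h * Cnorm (Csub (csum (dterm z) N) (Dser z)))).
    { apply cv0_plus; [apply cv0_plus|].
      - apply psum_cv. unfold inD; lra.
      - apply psum_cv. unfold inD; rewrite <- Er; lra.
      - apply cv0_scal. apply D_cv. rewrite <- Er; lra. }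
    intros N.
    set (xN := csum (fun k => Cmul (a k) (Etay z h (n k))) N).
    assert (Ex : xN = Csub (Csub (csum (term (Cadd z h)) N) (csum (term z) N)) (Cmul (csum (dterm z) N) h)).
    { unfold xN. rewrite !csum_sub, csum_mul, csum_sub. f_equal. apply functional_extensionality.
      intros k. unfold term, dterm, Etay.
      generalize (Cpow (Cadd z h) (n k)) (Cpow z (n k)) (Cpow z (n k - 1)). intros [] [] [].
      destruct (a k), h. unfold Csub, Cadd, Copp, Cmul. ceq. }
    eapply Rle_trans. apply (cn_tri2 X xN).
    apply Rplus_le_compat.
    - unfold xN. eapply Rle_trans. apply cn_csum.
      eapply Rle_trans. apply (psum_le _ (fun k => A k * (INR (n k) * INR (n k) * Q ^ (n k - 2)) * Cnorm h ^ 2)).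
      + intros k. rewrite cn_mul. fold (A k). rewrite Rmult_assoc. apply Rmult_le_compat_l. apply A_pos.
        eapply Rle_trans. apply (Etay_bound z h Q (n k)); auto; lra. right. ring.
      + rewrite <- scal_sum. rewrite Rmult_comm. apply Rmult_le_compat_r. apply pow2_ge_0. apply HBs.
    - rewrite Ex. unfold X.
      set (Fh := f (Cadd z h)). set (F0 := f z). set (D0 := Dser z).
      set (Ph := csum (term (Cadd z h)) N). set (P0 := csum (term z) N). set (DN := csum (dterm z) N).
      replace (Csub (Csub (Csub Fh F0) (Cmul D0 h)) (Csub (Csub Ph P0) (Cmul DN h)))
        with (Cadd (Csub (Csub Fh Ph) (Csub F0 P0)) (Cmul (Csub DN D0) h)).
      2: { destruct Fh, F0, D0, Ph, P0, DN, h. unfold Csub, Cadd, Copp, Cmul. ceq. }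
      eapply Rle_trans. apply cn_add. rewrite cn_mul.
      eapply Rle_trans. apply Rplus_le_compat_r. apply cn_sub.
      rewrite (cn_sub_sym Fh Ph), (cn_sub_sym F0 P0). right. ring. }
  assert (B * Cnorm h <= eps).
  { apply Rle_trans with ((B + 1) * (eps / (B + 1))).
    - apply Rmult_le_compat; lra.
    - right. field. lra. }
  assert (B * Cnorm h ^ 2 <= eps * Cnorm h).
  { replace (B * Cnorm h ^ 2) with ((B * Cnorm h) * Cnorm h) by ring.
    apply Rmult_le_compat_r; auto. }
  lra.
Qed.

Definition phi (k : nat) (r : R) : R := INR (n k) * ((1 + r) / 2) ^ (n k).
Definition Xp (N : nat) (r : R) : R := sum_f_R0 (fun k => A k ^ 2 * phi k r) N.
Definition Cl : R := 10 * lambda / (lambda - 1).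

Lemma Cl_pos : 0 < Cl.
Proof. unfold Cl. apply Rdiv_lt_0_compat; lra. Qed.

Lemma phi_pos k r : 0 <= r -> 0 <= phi k r.
Proof. intros. unfold phi. apply Rmult_le_pos; [apply pos_INR| apply pow_le; lra]. Qed.

Lemma Xp_pos N r : 0 <= r -> 0 <= Xp N r.
Proof. intros. apply psum_nonneg. intros k. apply Rmult_le_pos; [apply pow2_ge_0| apply phi_pos; auto]. Qed.

Lemma D_sq (z : Cx) (B : R) : Cnorm z < 1 -> 0 <= B -> (forall N, Xp N (Cnorm z) <= B) ->
  Cnorm (Dser z) ^ 2 <= 4 * (B * (2 * Cl / (1 - Cnorm z))).
Proof.
  intros Hz HB HXp. pose proof (cn_pos z) as Hr0.
  remember (Cnorm z) as r eqn:Er.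
  set (s := (1 + r) / 2). assert (Hs : 0 < s < 1) by (unfold s; lra).
  set (Yb := 2 * Cl / (1 - r)).
  assert (HYb : 0 < Yb) by (unfold Yb; pose proof Cl_pos; apply Rdiv_lt_0_compat; lra).
  set (SN := fun N => sum_f_R0 (fun k => A k * (INR (n k) * s ^ n k)) N).
  assert (HSN0 : forall N, 0 <= SN N).
  { intros N. apply psum_nonneg. intros k. apply Rmult_le_pos. apply A_pos.
    apply Rmult_le_pos; [apply pos_INR| apply pow_le; lra]. }
  assert (HS : forall N, SN N <= sqrt (B * Yb)).
  { intros N. assert (H2 : SN N ^ 2 <= B * Yb).
    { apply Rle_trans with (Xp N r * Yb); [| apply Rmult_le_compat_r; [lra| apply HXp]].
      apply cs_opt; auto. apply Xp_pos; auto.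
      intros t Ht.
      assert (E : forall k, A k * (INR (n k) * s ^ n k) <= (t * (A k ^ 2 * phi k r) + (INR (n k) * s ^ n k) / t) / 2).
      { intros k. pose proof (amgm (A k) t Ht). unfold phi. fold s.
        assert (0 <= INR (n k) * s ^ n k) by (apply Rmult_le_pos; [apply pos_INR| apply pow_le; lra]).
        apply Rle_trans with (((A k ^ 2 * t + / t) / 2) * (INR (n k) * s ^ n k)).
        - apply Rmult_le_compat_r; auto.
        - right. field. lra. }
      eapply Rle_trans. apply (psum_le _ _ N E).
      replace (fun k => (t * (A k ^ 2 * phi k r) + INR (n k) * s ^ n k / t) / 2)
        with (fun k => (A k ^ 2 * phi k r) * (t / 2) + (INR (n k) * s ^ n k) * (/ t / 2)).
      2: { apply functional_extensionality. intros k. field. lra. }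
      rewrite plus_sum, <- !scal_sum. fold (Xp N r).
      pose proof (lacunary s N Hs) as HY.
      assert (E2 : 10 * lambda / (lambda - 1) / (1 - s) = Yb).
      { unfold Yb, Cl, s. field. split; lra. }
      rewrite E2 in HY.
      assert (/ t / 2 * sum_f_R0 (fun k => INR (n k) * s ^ n k) N <= / t / 2 * Yb).
      { apply Rmult_le_compat_l; auto. apply Rlt_le. apply Rdiv_lt_0_compat; [apply Rinv_0_lt_compat|]; lra. }
      replace ((t * Xp N r + Yb / t) / 2) with (t / 2 * Xp N r + / t / 2 * Yb) by (field; lra).
      lra. }
    rewrite <- (sqrt_pow2 (SN N)) by auto. apply sqrt_le_1_alt. auto. }
  assert (HD : forall N, Cnorm (csum (dterm z) N) <= 2 * sqrt (B * Yb)).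
  { intros N. eapply Rle_trans. apply cn_csum.
    apply Rle_trans with (2 * SN N); [| specialize (HS N); lra].
    unfold SN. rewrite scal_sum. apply psum_le. intros k. rewrite cn_dterm. rewrite <- Er.
    pose proof (r_pow_le r (n k) ltac:(lra) (Hn_pos k)). fold s in H.
    pose proof (A_pos k). pose proof (pos_INR (n k)).
    replace (A k * (INR (n k) * s ^ n k) * 2) with (A k * (INR (n k) * (2 * s ^ n k))) by ring.
    apply Rmult_le_compat_l; auto. apply Rmult_le_compat_l; auto. }
  assert (HDs : Cnorm (Dser z) <= 2 * sqrt (B * Yb)).
  { apply (le_cv0 (fun N => Cnorm (Csub (csum (dterm z) N) (Dser z)))).
    apply D_cv. lra.
    intros N. eapply Rle_trans. apply (cn_tri2 (Dser z) (csum (dterm z) N)).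
    rewrite cn_sub_sym. apply Rplus_le_compat_r. apply HD. }
  assert (Cnorm (Dser z) ^ 2 <= (2 * sqrt (B * Yb)) ^ 2) by (apply pow_incr; split; [apply cn_pos| auto]).
  replace ((2 * sqrt (B * Yb)) ^ 2) with (4 * sqrt (B * Yb) ^ 2) in H by ring.
  rewrite pow2_sqrt in H by (apply Rmult_le_pos; lra). exact H.
Qed.

Lemma Xs_exists (rho : R) : 0 <= rho < 1 -> exists Xs, infinite_sum (fun k => A k ^ 2 * phi k rho) Xs.
Proof.
  intros Hr. set (Q := (1 + rho) / 2). assert (HQ : 0 < Q < 1) by (unfold Q; lra).
  destruct A_M as [M [HM [_ HAk]]].
  assert (Hw : forall k, 0 <= phi k rho <= INR (n k) ^ 3 * Q ^ (n k - 2)).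
  { intros k. split. apply phi_pos; lra. unfold phi. fold Q. pose proof (n_ge1 k).
    apply Rmult_le_compat. apply pos_INR. apply pow_le; lra. simpl. nra.
    apply pow_anti; [lra| lia]. }
  destruct (wsum Q _ HQ Hw) as [B [HB HBs]].
  apply (bounded_cv _ (M * B)).
  - intros k. apply Rmult_le_pos; [apply pow2_ge_0| apply phi_pos; lra].
  - intros N. eapply Rle_trans. apply (psum_le _ (fun k => (A k * phi k rho) * M)).
    + intros k. pose proof (A_pos k). specialize (HAk k). specialize (Hw k).
      replace (A k ^ 2 * phi k rho) with ((A k * phi k rho) * A k) by ring.
      apply Rmult_le_compat_l; auto. apply Rmult_le_pos; lra.
    + rewrite <- scal_sum. apply Rmult_le_compat_l; auto.
Qed.

Lemma tail_bound (r rho Xs : R) (N0 : nat) : 0 <= r <= rho ->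
  infinite_sum (fun k => A k ^ 2 * phi k rho) Xs ->
  forall N, Xp N r <= Xp N0 r + (Xs - Xp N0 rho).
Proof.
  intros Hr HXs N.
  assert (Hmono : forall k, phi k r <= phi k rho).
  { intros k. unfold phi. apply Rmult_le_compat_l. apply pos_INR. apply pow_incr. lra. }
  assert (Hnn : forall k, 0 <= A k ^ 2 * phi k rho).
  { intros k. apply Rmult_le_pos; [apply pow2_ge_0| apply phi_pos; lra]. }
  assert (HT : Xp N0 rho <= Xs) by (apply psum_le_lim; auto).
  destruct (le_lt_dec N N0) as [Hle|Hlt].
  - assert (Xp N r <= Xp N0 r).
    { apply psum_mono; auto. intros k. apply Rmult_le_pos; [apply pow2_ge_0| apply phi_pos; lra]. }
    lra.
  - assert (Hind : forall m, Xp (N0 + m) r - Xp N0 r <= Xp (N0 + m) rho - Xp N0 rho).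
    { induction m.
      - rewrite Nat.add_0_r. lra.
      - replace (N0 + S m)%nat with (S (N0 + m)) by lia. unfold Xp in *. rewrite !tech5.
        assert (A (S (N0 + m)) ^ 2 * phi (S (N0 + m)) r <= A (S (N0 + m)) ^ 2 * phi (S (N0 + m)) rho).
        { apply Rmult_le_compat_l; [apply pow2_ge_0| auto]. }
        lra. }
    replace N with (N0 + (N - N0))%nat by lia.
    specialize (Hind (N - N0)%nat).
    assert (Xp (N0 + (N - N0)) rho <= Xs) by (apply psum_le_lim; auto).
    lra.
Qed.

Lemma rev_tri (X Y : Cx) : Rabs (Cnorm X - Cnorm Y) <= Cnorm (Csub X Y).
Proof.
  pose proof (cn_tri2 X Y). pose proof (cn_tri2 Y X). rewrite (cn_sub_sym Y X) in H0.
  apply Rabs_le. lra.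
Qed.

Lemma prod_lip (p p' u v L1 L2 d e : R) :
  Rabs p <= 1 -> Rabs (p - p') <= 2 * e -> 0 <= u <= L1 -> 0 <= v <= L1 ->
  Rabs (u - v) <= L2 * d -> 0 <= L2 -> 0 <= d ->
  Rabs (p * u ^ 2 - p' * v ^ 2) <= 2 * L1 * L2 * d + 2 * L1 ^ 2 * e.
Proof.
  intros Hp Hpp Ha Hb Hab HL2 Hd.
  replace (p * u ^ 2 - p' * v ^ 2) with (p * ((u - v) * (u + v)) + v ^ 2 * (p - p')) by ring.
  eapply Rle_trans. apply Rabs_triang. rewrite !Rabs_mult.
  rewrite (Rabs_right (u + v)) by lra. rewrite (Rabs_right (v ^ 2)) by (apply Rle_ge, pow2_ge_0).
  pose proof (Rabs_pos p). pose proof (Rabs_pos (u - v)). pose proof (Rabs_pos (p - p')).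
  assert (T1 : Rabs p * (Rabs (u - v) * (u + v)) <= 1 * ((L2 * d) * (2 * L1))).
  { apply Rmult_le_compat; auto. apply Rmult_le_pos; lra. apply Rmult_le_compat; lra. }
  assert (T2 : v ^ 2 * Rabs (p - p') <= L1 ^ 2 * (2 * e)).
  { apply Rmult_le_compat; auto. apply pow2_ge_0. apply pow_incr; lra. }
  lra.
Qed.

Lemma p_bounds (r r' : R) : 0 <= r <= 1 -> 0 <= r' <= 1 ->
  Rabs ((1 - r ^ 2) * r) <= 1 /\ Rabs ((1 - r ^ 2) * r - (1 - r' ^ 2) * r') <= 2 * Rabs (r - r').
Proof.
  intros Hr Hr'. split.
  - apply Rabs_le. split; [nra|]. assert (0 <= 1 - r ^ 2) by nra. nra.
  - replace ((1 - r ^ 2) * r - (1 - r' ^ 2) * r') with ((r - r') * (1 - (r * r + r * r' + r' * r'))) by ring.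
    rewrite Rabs_mult. rewrite Rmult_comm. apply Rmult_le_compat_r. apply Rabs_pos.
    apply Rabs_le. split; nra.
Qed.

Definition gI (t r : R) : R := / PI * ((1 - r ^ 2) * Cnorm (Dser (polar r t)) ^ 2 * r).

Lemma g_lip (rho : R) : 0 <= rho < 1 -> exists K, 0 <= K /\
  forall t t' r r', 0 <= r <= rho -> 0 <= r' <= rho ->
    Rabs (gI t r - gI t' r') <= K * (Rabs (t - t') + Rabs (r - r')).
Proof.
  intros Hrho. set (Q := (1 + rho) / 2). assert (HQ : 0 < Q < 1) by (unfold Q; lra).
  destruct (D_bound Q HQ) as [L1 [HL1 HD1]].
  destruct (D_lip Q HQ) as [L2 [HL2 HD2]].
  pose proof PI_RGT_0 as HPI.
  exists (/ PI * (4 * L1 * L2 + 2 * L1 ^ 2)). split.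
  { apply Rmult_le_pos. apply Rlt_le, Rinv_0_lt_compat; lra. pose proof (pow2_ge_0 L1). nra. }
  intros t t' r r' Hr Hr'.
  set (z := polar r t). set (w := polar r' t').
  assert (Hz : Cnorm z <= Q) by (unfold z; rewrite cn_polar, Rabs_right; unfold Q; lra).
  assert (Hw : Cnorm w <= Q) by (unfold w; rewrite cn_polar, Rabs_right; unfold Q; lra).
  assert (Hd : Cnorm (Csub z w) <= Rabs (r - r') + 2 * Rabs (t - t')).
  { unfold z, w. eapply Rle_trans. apply polar_lip. rewrite (Rabs_right r') by lra.
    pose proof (Rabs_pos (t - t')). nra. }
  destruct (p_bounds r r' ltac:(lra) ltac:(lra)) as [Hp1 Hp2].
  assert (Hab : Rabs (Cnorm (Dser z) - Cnorm (Dser w)) <= L2 * Cnorm (Csub z w)).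
  { eapply Rle_trans. apply rev_tri. apply HD2; auto. }
  pose proof (prod_lip ((1 - r ^ 2) * r) ((1 - r' ^ 2) * r') (Cnorm (Dser z)) (Cnorm (Dser w)) L1 L2
               (Cnorm (Csub z w)) (Rabs (r - r')) Hp1 Hp2
               (conj (cn_pos _) (HD1 z Hz)) (conj (cn_pos _) (HD1 w Hw)) Hab HL2 (cn_pos _)) as HP.
  unfold gI. fold z w.
  replace (/ PI * ((1 - r ^ 2) * Cnorm (Dser z) ^ 2 * r) - / PI * ((1 - r' ^ 2) * Cnorm (Dser w) ^ 2 * r'))
    with (/ PI * ((1 - r ^ 2) * r * Cnorm (Dser z) ^ 2 - (1 - r' ^ 2) * r' * Cnorm (Dser w) ^ 2)) by ring.
  rewrite Rabs_mult, (Rabs_right (/ PI)) by (apply Rle_ge, Rlt_le, Rinv_0_lt_compat; lra).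
  rewrite (Rmult_assoc (/ PI) (4 * L1 * L2 + 2 * L1 ^ 2)). apply Rmult_le_compat_l. apply Rlt_le, Rinv_0_lt_compat; lra.
  eapply Rle_trans. exact HP.
  pose proof (Rabs_pos (t - t')). pose proof (Rabs_pos (r - r')).
  assert (2 * L1 * L2 * Cnorm (Csub z w) <= 2 * L1 * L2 * (Rabs (r - r') + 2 * Rabs (t - t'))).
  { apply Rmult_le_compat_l; auto. apply Rmult_le_pos; lra. }
  pose proof (pow2_ge_0 L1). assert (0 <= L1 * L2) by nra.
  nra.
Qed.

Lemma g_bound (t r rho Xs : R) (N0 : nat) : 0 <= r <= rho -> rho < 1 ->
  infinite_sum (fun k => A k ^ 2 * phi k rho) Xs ->
  gI t r <= (16 * Cl / PI) * (Xp N0 r + (Xs - Xp N0 rho)).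
Proof.
  intros Hr Hrho HXs.
  set (B := Xp N0 r + (Xs - Xp N0 rho)).
  assert (HB : 0 <= B).
  { unfold B. pose proof (Xp_pos N0 r ltac:(lra)).
    assert (Xp N0 rho <= Xs).
    { apply psum_le_lim; auto. intros k. apply Rmult_le_pos; [apply pow2_ge_0| apply phi_pos; lra]. }
    lra. }
  assert (Hz : Cnorm (polar r t) = r) by (rewrite cn_polar; apply Rabs_right; lra).
  pose proof (D_sq (polar r t) B ltac:(lra) HB) as HD.
  rewrite Hz in HD. specialize (HD (tail_bound r rho Xs N0 Hr HXs)).
  pose proof PI_RGT_0 as HPI. pose proof Cl_pos as HCl.
  unfold gI.
  assert (E : (1 - r ^ 2) * (4 * (B * (2 * Cl / (1 - r)))) * r = 8 * Cl * B * ((1 + r) * r)).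
  { field. lra. }
  assert (H1 : (1 - r ^ 2) * Cnorm (Dser (polar r t)) ^ 2 * r <= (1 - r ^ 2) * (4 * (B * (2 * Cl / (1 - r)))) * r).
  { apply Rmult_le_compat_r; [lra|]. apply Rmult_le_compat_l; [nra| auto]. }
  rewrite E in H1.
  assert (8 * Cl * B * ((1 + r) * r) <= 8 * Cl * B * 2).
  { apply Rmult_le_compat_l. apply Rmult_le_pos; lra. nra. }
  replace (16 * Cl / PI * B) with (/ PI * (8 * Cl * B * 2)) by (field; lra).
  apply Rmult_le_compat_l. apply Rlt_le, Rinv_0_lt_compat; lra. lra.
Qed.

Lemma Xp_is_RInt (N : nat) (c rho : R) :
  is_RInt (fun r => Xp N r) c rho (sum_f_R0 (fun k => A k ^ 2 * RInt (phi k) c rho) N).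
Proof.
  assert (Hk : forall k, is_RInt (phi k) c rho (RInt (phi k) c rho)).
  { intros k. apply (RInt_correct (V := R_CompleteNormedModule)). eexists. apply (phi_is_RInt (n k) c rho). }
  induction N.
  - simpl. unfold Xp. simpl. apply (is_RInt_scal (V := R_NormedModule) (phi 0%nat) c rho (A 0%nat ^ 2)). apply Hk.
  - simpl. apply (is_RInt_ext (V := R_NormedModule) (fun r => plus (Xp N r) (scal (A (S N) ^ 2) (phi (S N) r)))).
    + intros x _. unfold Xp. simpl. reflexivity.
    + apply (is_RInt_plus (V := R_NormedModule)); auto.
      apply (is_RInt_scal (V := R_NormedModule)). apply Hk.
Qed.

Lemma carleson : exists K, 0 < K /\ forall t0 l, 0 < l <= 2 * PI -> carleson_box_bound Dser K t0 l.
Proof.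
  destruct A_M as [M [HM [HSA HAk]]]. destruct HW as [SW HSW].
  pose proof PI_RGT_0 as HPI. pose proof Cl_pos as HCl.
  set (K3 := 16 * Cl / PI). assert (HK3 : 0 < K3) by (unfold K3; apply Rdiv_lt_0_compat; lra).
  set (CL := 20 + 4 * ln PI ^ 2). assert (HCL : 0 < CL) by (unfold CL; pose proof (pow2_ge_0 (ln PI)); lra).
  assert (HSW0 : 0 <= SW) by (eapply Rle_trans; [| apply (psum_le_lim W SW W_pos HSW 0)]; apply W_pos).
  set (K0 := K3 * (CL * (M * M + SW))).
  assert (HK0 : 0 <= K0) by (unfold K0; apply Rmult_le_pos; [lra| apply Rmult_le_pos; nra]).
  exists (K0 + 1). split; [lra|].
  intros t0 l Hl rho Hrho.
  set (c := 1 - l / (2 * PI)) in *.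
  assert (Hlh : l / (2 * PI) <= 1).
  { apply (Rmult_le_reg_r (2 * PI)); [lra|]. unfold Rdiv. rewrite Rmult_assoc, Rinv_l; lra. }
  assert (Hlp : 0 < l / (2 * PI)) by (apply Rdiv_lt_0_compat; lra).
  assert (Hc : 0 <= c <= rho) by (unfold c in *; lra).
  destruct (g_lip rho ltac:(lra)) as [Kl [HKl HgL]].
  set (LN := ln (2 / l) ^ 2). assert (HLN : 0 <= LN) by apply pow2_ge_0.
  assert (HF : forall t, t0 <= t <= t0 + l -> F2 gI t0 (t0 + l) c rho t * LN <= K0).
  { intros t Ht.
    destruct (Xs_exists rho ltac:(lra)) as [Xs HXs].
    apply (le_cv0 (fun N0 => (K3 * (rho - c) * LN) * (Xs - Xp N0 rho))).
    { apply cv0_scal. intros eps Heps. destruct (HXs eps Heps) as [N HN]. exists N. intros m Hm.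
      specialize (HN m Hm). unfold R_dist in *. rewrite Rminus_0_r, Rabs_minus_sym. exact HN. }
    intros N0.
    set (T0 := Xs - Xp N0 rho).
    set (Sg := sum_f_R0 (fun k => A k ^ 2 * RInt (phi k) c rho) N0).
    assert (HT0 : 0 <= T0).
    { unfold T0. assert (Xp N0 rho <= Xs).
      { apply psum_le_lim; auto. intros k. apply Rmult_le_pos; [apply pow2_ge_0| apply phi_pos; lra]. }
      lra. }
    assert (HI : is_RInt (fun r => K3 * (Xp N0 r + T0)) c rho (K3 * (Sg + (rho - c) * T0))).
    { apply (is_RInt_ext (V := R_NormedModule) (fun r => scal K3 (plus (Xp N0 r) T0))).
      { intros; reflexivity. }
      apply (is_RInt_scal (V := R_NormedModule)). apply (is_RInt_plus (V := R_NormedModule)).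
      apply Xp_is_RInt. apply (is_RInt_const (V := R_NormedModule)). }
    assert (HFt : F2 gI t0 (t0 + l) c rho t <= K3 * (Sg + (rho - c) * T0)).
    { rewrite <- (is_RInt_unique _ _ _ _ HI). unfold F2.
      rewrite (clamp_id t0 (t0 + l) t Ht).
      apply RInt_le; [lra| | eexists; exact HI|].
      - apply (lip_ex_RInt _ Kl). intros u v.
        pose proof (clamp_in c rho u ltac:(lra)). pose proof (clamp_in c rho v ltac:(lra)).
        eapply Rle_trans. apply HgL; lra. rewrite Rminus_diag, Rabs_R0, Rplus_0_l.
        apply Rmult_le_compat_l; auto. apply clamp_lip. lra.
      - intros r Hr. rewrite (clamp_id c rho r) by lra. apply g_bound; auto; lra. }
    assert (HSg : Sg * LN <= CL * (M * M + SW)).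
    { unfold Sg. rewrite Rmult_comm, scal_sum.
      eapply Rle_trans. apply (psum_le _ (fun k => A k ^ 2 * CL + W k * CL)).
      - intros k. destruct (phi_int (n k) c rho Hc ltac:(lra) (Hn_pos k)) as [I0 [I1 I2]].
        change (RInt (fun r => INR (n k) * ((1 + r) / 2) ^ n k) c rho) with (RInt (phi k) c rho) in *.
        pose proof (log_term (RInt (phi k) c rho) l (INR (n k)) Hl (n_ge1 k) I0) as HL.
        assert (HLk : RInt (phi k) c rho * ln (2 / l) ^ 2 <= CL * (1 + ln (INR (n k)) ^ 3)).
        { apply HL; auto. eapply Rle_trans. exact I1. apply Rmult_le_compat_l. apply pos_INR. unfold c. lra. }
        fold LN in HLk. unfold W. fold (A k).
        replace (A k ^ 2 * RInt (phi k) c rho * LN) with (A k ^ 2 * (RInt (phi k) c rho * LN)) by ring.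
        apply Rle_trans with (A k ^ 2 * (CL * (1 + ln (INR (n k)) ^ 3))).
        + apply Rmult_le_compat_l; [apply pow2_ge_0| auto].
        + right. ring.
      - rewrite plus_sum, <- !scal_sum.
        assert (sum_f_R0 (fun k => A k ^ 2) N0 <= M * M).
        { eapply Rle_trans. apply (psum_le _ (fun k => A k * M)).
          - intros k. pose proof (A_pos k). specialize (HAk k). simpl. rewrite Rmult_1_r.
            apply Rmult_le_compat_l; auto.
          - rewrite <- scal_sum. rewrite Rmult_comm. apply Rmult_le_compat_r; auto. }
        pose proof (psum_le_lim W SW W_pos HSW N0). nra. }
    assert (F2 gI t0 (t0 + l) c rho t * LN <= K3 * (Sg + (rho - c) * T0) * LN) by (apply Rmult_le_compat_r; auto).
    assert (K3 * (Sg * LN) <= K3 * (CL * (M * M + SW))) by (apply Rmult_le_compat_l; lra).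
    unfold K0. replace (K3 * (Sg + (rho - c) * T0) * LN) with (K3 * (Sg * LN) + K3 * (rho - c) * LN * T0) in H by ring.
    lra. }
  exists (RInt (F2 gI t0 (t0 + l) c rho) t0 (t0 + l)). split.
  - apply (int2_lip gI t0 (t0 + l) c rho Kl); try lra.
    intros tt tt' r r' _ _ Hr Hr'. apply HgL; lra.
  - fold LN. destruct (Req_dec LN 0) as [H0|H0].
    + rewrite H0, Rmult_0_r. nra.
    + assert (HB : RInt (F2 gI t0 (t0 + l) c rho) t0 (t0 + l) <= (t0 + l - t0) * (K0 / LN)).
      { apply (RInt_F2_bound gI t0 (t0 + l) c rho Kl); try lra.
        - intros tt tt' r r' _ _ Hr Hr'. apply HgL; lra.
        - intros t Ht. apply (Rmult_le_reg_r LN); [lra|]. unfold Rdiv. rewrite Rmult_assoc, Rinv_l by lra.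
          rewrite Rmult_1_r. apply HF; auto. }
      replace (t0 + l - t0) with l in HB by ring.
      apply (Rmult_le_compat_r LN) in HB; [|lra].
      replace (l * (K0 / LN) * LN) with (l * K0) in HB by (field; lra). nra.
Qed.

Lemma H1_f : (forall z, inD z -> exists w, has_cderiv f z w) -> H1 f.
Proof.
  intros Han. split; auto.
  destruct f_bound as [M [HM Hf]]. exists M. intros r Hr.
  set (Q := (1 + r) / 2). assert (HQ : 0 < Q < 1) by (unfold Q; lra).
  destruct (f_lip Q HQ) as [Lf [HLf HfL]].
  pose proof PI_RGT_0 as HPI.
  set (G := fun t => Cnorm (f (polar r t))).
  assert (HGL : forall u v, Rabs (G u - G v) <= (Lf * (2 * r)) * Rabs (u - v)).
  { intros u v. unfold G. eapply Rle_trans. apply rev_tri.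
    eapply Rle_trans. apply HfL; rewrite cn_polar, Rabs_right; unfold Q; lra.
    eapply Rle_trans. apply Rmult_le_compat_l; auto. apply polar_lip.
    rewrite Rminus_diag, Rabs_R0, (Rabs_right r) by lra. right. ring. }
  exists (RInt G 0 (2 * PI)). split.
  - apply (msum_int1 G (Lf * (2 * r))); auto; [lra| apply Rmult_le_pos; lra].
  - assert (HI : is_RInt (fun _ => M) 0 (2 * PI) (scal (2 * PI - 0) M)) by apply (is_RInt_const (V := R_NormedModule)).
    assert (RInt G 0 (2 * PI) <= RInt (fun _ => M) 0 (2 * PI)).
    { apply RInt_le; [lra| apply (lip_ex_RInt _ _ _ _ HGL)| eexists; exact HI|].
      intros x _. apply Hf. unfold inD. rewrite cn_polar, Rabs_right; lra. }
    rewrite (is_RInt_unique _ _ _ _ HI) in H. change (scal (2 * PI - 0) M) with ((2 * PI - 0) * M) in H.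
    apply (Rmult_le_reg_r (2 * PI)); [lra|]. unfold Rdiv. rewrite Rmult_assoc, Rinv_l by lra. lra.
Qed.

Hypothesis Hf_anal : forall z, inD z -> exists w, has_cderiv f z w.

Lemma main_sec : BMOA_log f /\ Hinf f.
Proof.
  split.
  - split. apply H1_f; auto.
    exists Dser. split. intros z Hz. apply f_deriv; auto.
    apply carleson.
  - split; auto. destruct f_bound as [M [_ HM]]. exists M. auto.
Qed.
End Main.

Open Scope R_scope.

Theorem mainTheorem11 (a : nat -> Cx) (n : nat -> nat) (lambda : R) (f : Cx -> Cx)
  (Hn_pos : forall k, (0 < n k)%nat)
  (Hlam : 1 < lambda)
  (Hgap : forall k, INR (n (S k)) >= lambda * INR (n k))
  (Hf_series : forall z, inD z ->
      Un_cv (fun N => Cnorm (Csub (lac_psum a n z N) (f z))) 0)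
  (Hf_anal : forall z, inD z -> exists w, has_cderiv f z w)
  (Hsum : exists S, infinite_sum
      (fun k => (Cnorm (a k)) ^ 2 * (ln (INR (n k))) ^ 3) S) :
  BMOA_log f /\ Hinf f.
Proof.
  exact (main_sec a n lambda Hn_pos Hlam Hgap Hsum f Hf_series Hf_anal).
Qed.
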